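(* Let $\eta$ be a primitive $7$-th root of unity. Call a real polynomial $G(x,y,z)$ special if $G(\eta x,\eta^2y,\eta^4z)=G(x,y,z)$, $G=1$ on the plane $x+y+z=1$, $G$ has only non-negative coefficients, and $G(0,0,0)=0$. Let $G$ be special. If $\deg G=7$, then $N(G)=17$. There is no special $G$ of degree $8$ or $9$. If $\deg G=10$, then $N(G)=29$ or $N(G)=30$. If $\deg G=11$, then $N(G)\ge 31$.
   Context: $N(G)$ denotes the number of distinct monomials with nonzero coefficient in $G$. *)

(* Defs.v *)
From HB Require Import structures.
From mathcomp Require Import all_boot all_order all_algebra.
From mathcomp Require Import mpoly.
From mathcomp.real_closed Require Import complex.
Set Implicit Arguments. Unset Strict Implicit. Unset Printing Implicit Defensive.
Import Order.TTheory GRing.Theory Num.Theory.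
Local Open Scope ring_scope.

Definition ev3 (K : comNzRingType) (p : {mpoly K[3]}) (x y z : K) : K :=
  p.@[fun i : 'I_3 => nth 0 [:: x; y; z] i].

Definition special (R : rcfType) (eta : complex R) (G : {mpoly R[3]}) : Prop :=
  [/\ (forall x y z : complex R,
         ev3 (map_mpoly (real_complex R) G) (eta * x) (eta ^+ 2 * y) (eta ^+ 4 * z)
         = ev3 (map_mpoly (real_complex R) G) x y z),
      (forall x y z : R, x + y + z = 1 -> ev3 G x y z = 1),
      (forall m, 0 <= G@_m) &
      ev3 G 0 0 0 = 0].

(* total degree of a (nonzero) polynomial: msize p = deg p + 1 *)
Definition tdeg (R : nzRingType) (n : nat) (p : {mpoly R[n]}) : nat := (msize p).-1.

Definition Nmon (R : nzRingType) (n : nat) (p : {mpoly R[n]}) : nat := size (msupp p).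

(* Main.v *)
Require Import Defs.
From HB Require Import structures.
From mathcomp Require Import all_boot all_order all_algebra.
From mathcomp Require Import mpoly.
From mathcomp.real_closed Require Import complex.
From mathcomp Require Import ring lra zify.
Import Order.TTheory GRing.Theory Num.Theory.
Local Open Scope ring_scope.
Set Implicit Arguments. Unset Strict Implicit.

Lemma id1 (K : numDomainType) (n : nat) (C : nat -> K) :
  (forall x : K, \sum_(0 <= i < n) C i * x ^+ i = 0) ->
  forall i, (i < n)%N -> C i = 0.
Proof.
move=> H i lti.
pose p := \poly_(j < n) C j.
have Hp : p = 0.
  apply/eqP; apply/negP => /negP pn0.
  have := max_poly_roots pn0 (rs := [seq j%:R | j <- iota 0 n]).
  rewrite size_map size_iota.
  have -> : all (root p) [seq j%:R | j <- iota 0 n].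
    apply/allP => y _; rewrite /root /p horner_poly -(big_mkord xpredT (fun i => C i * y ^+ i)).
    by rewrite H.
  rewrite map_inj_uniq ?iota_uniq; last by move=> a b /eqP; rewrite eqr_nat => /eqP.
  move=> /(_ isT isT) /leq_trans /(_ (size_poly _ _)).
  by rewrite ltnn.
have := congr1 (fun q : {poly K} => q`_i) Hp.
by rewrite /p coef_poly lti coef0.
Qed.

Lemma id2 (K : numDomainType) (n : nat) (C : nat -> nat -> K) :
  (forall x y : K, \sum_(0 <= i < n) \sum_(0 <= j < n) C i j * (x ^+ i * y ^+ j) = 0) ->
  forall i j, (i < n)%N -> (j < n)%N -> C i j = 0.
Proof.
move=> H i j lti ltj.
have H1 : forall y : K, forall i, (i < n)%N -> \sum_(0 <= j < n) C i j * y ^+ j = 0.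
  move=> y; apply: (@id1 _ n (fun i => \sum_(0 <= j < n) C i j * y ^+ j)).
  move=> x; apply: etrans _ (H x y); apply: eq_bigr => k _.
  rewrite mulr_suml; apply: eq_bigr => l _; ring.
by apply: (@id1 _ n (fun j => C i j)) => // y; apply: H1.
Qed.

Lemma id3 (K : numDomainType) (n : nat) (C : nat -> nat -> nat -> K) :
  (forall x y z : K, \sum_(0 <= i < n) \sum_(0 <= j < n) \sum_(0 <= k < n)
       C i j k * (x ^+ i * y ^+ j * z ^+ k) = 0) ->
  forall i j k, (i < n)%N -> (j < n)%N -> (k < n)%N -> C i j k = 0.
Proof.
move=> H i j k lti ltj ltk.
have H1 : forall z : K, forall i j, (i < n)%N -> (j < n)%N ->
    \sum_(0 <= k < n) C i j k * z ^+ k = 0.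
  move=> z; apply: (@id2 _ n (fun i j => \sum_(0 <= k < n) C i j k * z ^+ k)).
  move=> x y; apply: etrans _ (H x y z); apply: eq_bigr => a _; apply: eq_bigr => b _.
  rewrite mulr_suml; apply: eq_bigr => l _; ring.
by apply: (@id1 _ n (fun k => C i j k)) => // z; apply: H1.
Qed.

Definition mk3 (t : nat * nat * nat) : 'X_{1..3} :=
  [multinom (nth 0%N [:: t.1.1; t.1.2; t.2] i) | i < 3].

Definition mono (K : comNzRingType) (t : nat * nat * nat) (x y z : K) : K :=
  x ^+ t.1.1 * y ^+ t.1.2 * z ^+ t.2.
Arguments mono {K}.

Lemma mk3_inj : injective mk3.
Proof.
move=> [[a b] c] [[a' b'] c'] /mnmP H.
have h0 := H ord0; have h1 := H (lift ord0 ord0); have h2 := H ord_max.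
rewrite !mnmE /= in h0 h1 h2.
by rewrite h0 h1 h2.
Qed.

Lemma mk3_surj (m : 'X_{1..3}) : m = mk3 (m ord0, m (lift ord0 ord0), m ord_max).
Proof.
apply/mnmP => i; rewrite mnmE.
by case: i => [[|[|[|i]]] Hi] //=; congr (m _); apply: val_inj.
Qed.

Lemma sum_sub (K : nmodType) (T : eqType) (s L : seq T) (F : T -> K) :
  uniq s -> uniq L -> {subset s <= L} -> (forall m, m \notin s -> F m = 0) ->
  \sum_(m <- s) F m = \sum_(m <- L) F m.
Proof.
move=> us uL sL F0.
rewrite [RHS](bigID (fun m => m \in s)) /= [X in _ = _ + X]big1; last first.
  by move=> m /F0.
rewrite addr0 -(big_filter L); apply: perm_big.
apply: uniq_perm => //; first exact: filter_uniq.
move=> m; rewrite mem_filter; case: (boolP (m \in s)) => //= ms.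
by rewrite (sL _ ms).
Qed.

Lemma prod3 (K : comNzRingType) (x y z : K) (m : 'X_{1..3}) :
  \prod_(i < 3) (nth 0 [:: x; y; z] i) ^+ (m i) =
  mono (m ord0, m (lift ord0 ord0), m ord_max) x y z.
Proof.
rewrite !big_ord_recl big_ord0 mulr1 /mono /= mulrA.
by congr (_ * _ ^+ m _); apply: val_inj.
Qed.

Lemma ev3_L (K : comNzRingType) (p : {mpoly K[3]}) (L : seq (nat * nat * nat)) x y z :
  uniq L -> {subset msupp p <= map mk3 L} ->
  ev3 p x y z = \sum_(t <- L) p@_(mk3 t) * mono t x y z.
Proof.
move=> uL sL.
rewrite /ev3 mevalE.
have -> : \sum_(t <- L) p@_(mk3 t) * mono t x y z =
   \sum_(m <- map mk3 L) p@_m * \prod_(i < 3) (nth 0 [:: x; y; z] i) ^+ (m i).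
  rewrite big_map; apply: eq_bigr => t _; rewrite prod3.
  by case: t => [[a b] c]; rewrite !mnmE.
apply: (@sum_sub _ _ (msupp p) (map mk3 L)) => //.
- by rewrite map_inj_uniq //; exact: mk3_inj.
- by move=> m /memN_msupp_eq0 ->; rewrite mul0r.
Qed.

Definition Lbox : seq (nat * nat * nat) :=
  [seq (ab, c) | ab <- [seq (a, b) | a <- iota 0 12, b <- iota 0 12], c <- iota 0 12].

Lemma uniq_Lbox : uniq Lbox.
Proof. by vm_compute. Qed.

Lemma mdeg3 (m : 'X_{1..3}) : mdeg m = (m ord0 + m (lift ord0 ord0) + m ord_max)%N.
Proof.
rewrite mdegE !big_ord_recl big_ord0 addn0 addnA.
by congr (_ + _ + m _)%N; apply: val_inj.
Qed.

Lemma box_sub (K : nzRingType) (p : {mpoly K[3]}) :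
  (msize p <= 12)%N -> {subset msupp p <= map mk3 Lbox}.
Proof.
move=> hs m /msize_mdeg_lt hm.
have hd : (mdeg m < 12)%N by apply: leq_trans hs.
rewrite mdeg3 in hd.
rewrite [m]mk3_surj; apply: map_f.
apply: (@allpairs_f _ _ _ (fun ab c => (ab, c))); last by rewrite mem_iota /=; lia.
by apply: (@allpairs_f _ _ _ (fun a b => (a, b))); rewrite mem_iota /=; lia.
Qed.

Lemma mono_eta (K : comNzRingType) (e x y z : K) t :
  mono t (e * x) (e ^+ 2 * y) (e ^+ 4 * z) =
  e ^+ (t.1.1 + 2 * t.1.2 + 4 * t.2)%N * mono t x y z.
Proof.
rewrite /mono !exprMn !exprD expr0.
ring.
Qed.

Lemma inv_coef (R : rcfType) (eta : complex R) (G : {mpoly R[3]}) :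
  7.-primitive_root eta ->
  (forall x y z : complex R,
         ev3 (map_mpoly (real_complex R) G) (eta * x) (eta ^+ 2 * y) (eta ^+ 4 * z)
         = ev3 (map_mpoly (real_complex R) G) x y z) ->
  (msize G <= 12)%N ->
  forall m, m \in msupp G ->
    ((m ord0 + 2 * m (lift ord0 ord0) + 4 * m ord_max) %% 7 = 0)%N.
Proof.
move=> Heta Hinv hs.
set H := map_mpoly (real_complex R) G.
have sH : {subset msupp H <= map mk3 Lbox}.
  move=> m; rewrite mcoeff_msupp mcoeff_map_mpoly => hm.
  apply: (box_sub hs); rewrite mcoeff_msupp.
  by apply: contra hm => /eqP ->; rewrite raddf0.
have key : forall x y z : complex R,
   \sum_(t <- Lbox) (H@_(mk3 t) * (eta ^+ (t.1.1 + 2 * t.1.2 + 4 * t.2)%N - 1))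
      * mono t x y z = 0.
  move=> x y z; have := Hinv x y z.
  rewrite !(ev3_L _ _ _ uniq_Lbox sH) => /eqP; rewrite -subr_eq0 -sumrB => /eqP H0; apply: etrans _ H0.
  by apply: eq_bigr => t _; rewrite mono_eta; ring.
have key2 := @id3 _ 12 (fun a b c =>
   H@_(mk3 (a, b, c)) * (eta ^+ (a + 2 * b + 4 * c)%N - 1)).
move=> m hm.
have hd : (mdeg m < 12)%N by apply: leq_trans hs; exact: msize_mdeg_lt.
rewrite mdeg3 in hd.
have hK : forall x y z : complex R,
    \sum_(0 <= i < 12) \sum_(0 <= j < 12) \sum_(0 <= k < 12)
      H@_(mk3 (i, j, k)) * (eta ^+ (i + 2 * j + 4 * k)%N - 1) *
      (x ^+ i * y ^+ j * z ^+ k) = 0.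
  by move=> x y z; apply: etrans _ (key x y z); rewrite /Lbox !big_allpairs.
have hb0 : (m ord0 < 12)%N by lia.
have hb1 : (m (lift ord0 ord0) < 12)%N by lia.
have hb2 : (m ord_max < 12)%N by lia.
have /eqP := key2 hK _ _ _ hb0 hb1 hb2.
rewrite -mk3_surj mulf_eq0 => /orP [].
- by rewrite mcoeff_map_mpoly fmorph_eq0 mcoeff_eq0 hm.
- rewrite subr_eq0 -(expr0 eta) (eq_prim_root_expr Heta) => /eqP ->.
  by rewrite mod0n.
Qed.

Definition Linv : seq (nat * nat * nat) :=
  [:: (1,1,1); (0,1,3); (1,3,0); (3,0,1); (0,3,2); (2,0,3); (3,2,0); (0,5,1); (1,0,5); (2,2,2); (5,1,0); (0,0,7); (0,7,0); (1,2,4); (2,4,1); (4,1,2); (7,0,0); (0,2,6); (1,4,3); (2,6,0); (3,1,4); (4,3,1); (6,0,2); (0,4,5); (1,6,2); (2,1,6); (3,3,3); (4,5,0); (5,0,4); (6,2,1); (0,6,4); (1,1,8); (1,8,1); (2,3,5); (3,5,2); (4,0,6); (5,2,3); (6,4,0); (8,1,1); (0,1,10); (0,8,3); (1,3,7); (1,10,0); (2,5,4); (3,0,8); (3,7,1); (4,2,5); (5,4,2); (7,1,3); (8,3,0); (10,0,1)]%N.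

Lemma uniq_Linv : uniq Linv.
Proof. by vm_compute. Qed.

Lemma Linv_complete : all (fun t : nat * nat * nat =>
   [&& (t.1.1 + t.1.2 + t.2 < 12)%N, ((t.1.1 + 2 * t.1.2 + 4 * t.2) %% 7 == 0)%N &
       t != (0,0,0)%N] ==> (t \in Linv)) Lbox.
Proof. by vm_compute. Qed.

Lemma Lbox_head : Lbox = (0,0,0)%N :: behead Lbox.
Proof. by vm_compute. Qed.


Lemma ev3_000 (K : comNzRingType) (p : {mpoly K[3]}) :
  (msize p <= 12)%N -> ev3 p 0 0 0 = p@_(mk3 (0,0,0)%N).
Proof.
move=> hs; rewrite (ev3_L _ _ _ uniq_Lbox (box_sub hs)).
have := uniq_Lbox; rewrite Lbox_head big_cons cons_uniq => /andP [hn _].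
rewrite big_seq big1 ?addr0; first by rewrite /mono !expr0 !mulr1.
move=> [[a b] c] hin.
have : (a, b, c) != (0,0,0)%N by apply: contraNneq hn => <-.
rewrite /mono; case: a {hin} => [|a]; case: b => [|b]; case: c => [|c] //= _;
  by rewrite ?exprS ?(mul0r, mulr0).
Qed.


Lemma Linv_sub (R : rcfType) (eta : complex R) (G : {mpoly R[3]}) :
  7.-primitive_root eta -> special eta G -> (msize G <= 12)%N ->
  {subset msupp G <= map mk3 Linv}.
Proof.
move=> Heta [Hinv _ _ H0] hs m hm.
have hmod := inv_coef Heta Hinv hs hm.
have hd : (mdeg m < 12)%N by apply: leq_trans hs; exact: msize_mdeg_lt.
rewrite mdeg3 in hd.
have hL : (m ord0, m (lift ord0 ord0), m ord_max) \in Lbox.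
  apply: (@allpairs_f _ _ _ (fun ab c => (ab, c))); last by rewrite mem_iota /=; lia.
  by apply: (@allpairs_f _ _ _ (fun a b => (a, b))); rewrite mem_iota /=; lia.
suff hin : (m ord0, m (lift ord0 ord0), m ord_max) \in Linv.
  by rewrite [m]mk3_surj; apply: map_f.
have := allP Linv_complete _ hL; rewrite /= hd hmod eqxx /=.
have -> : (m ord0, m (lift ord0 ord0), m ord_max) != (0, 0, 0)%N.
  apply/negP => /eqP h0.
  move: hm; rewrite mcoeff_msupp [m]mk3_surj h0 -ev3_000 //.
  by rewrite H0 eqxx.
by [].
Qed.

Definition val (R : rcfType) (t : nat * nat * nat) (a u b w : R) : R :=
  match t with
  | (1, 1, 1)%N => 14 + (- 1) * a + 7 * w
  | (0, 1, 3)%N => 7 + (- 1) * u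
  | (1, 3, 0)%N => 7 + (- 1) * b
  | (3, 0, 1)%N => 7 + (- 1) * w
  | (0, 3, 2)%N => 14
  | (2, 0, 3)%N => 14
  | (3, 2, 0)%N => 14
  | (0, 5, 1)%N => 7
  | (1, 0, 5)%N => 7
  | (2, 2, 2)%N => 7 + 14 * a + (- 98) * w
  | (5, 1, 0)%N => 7
  | (0, 0, 7)%N => 1
  | (0, 7, 0)%N => 1
  | (1, 2, 4)%N => 7 + 7 * a + 14 * u + (- 49) * w
  | (2, 4, 1)%N => 7 + 7 * a + 14 * b + (- 49) * w
  | (4, 1, 2)%N => 7 + 7 * a + (- 35) * w
  | (7, 0, 0)%N => 1
  | (0, 2, 6)%N => 7 * u
  | (1, 4, 3)%N => 14 * a + 7 * u + 7 * b + (- 98) * w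
  | (2, 6, 0)%N => 7 * b
  | (3, 1, 4)%N => 14 * a + 7 * u + (- 91) * w
  | (4, 3, 1)%N => 14 * a + 7 * b + (- 91) * w
  | (6, 0, 2)%N => 7 * w
  | (0, 4, 5)%N => 14 * u
  | (1, 6, 2)%N => 7 * a + 14 * b + (- 49) * w
  | (2, 1, 6)%N => 7 * a + 14 * u + (- 49) * w
  | (3, 3, 3)%N => 7 * a + 14 * u + 14 * b + (- 35) * w
  | (4, 5, 0)%N => 14 * b
  | (5, 0, 4)%N => 14 * w
  | (6, 2, 1)%N => 7 * a + (- 35) * w
  | (0, 6, 4)%N => 7 * u
  | (1, 1, 8)%N => a + 7 * u + (- 7) * w
  | (1, 8, 1)%N => a + 7 * b + (- 7) * w
  | (2, 3, 5)%N => 7 * a + 7 * u + 7 * b + (- 49) * w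
  | (3, 5, 2)%N => 7 * a + 7 * b + (- 42) * w
  | (4, 0, 6)%N => 7 * w
  | (5, 2, 3)%N => 7 * a + 7 * u + (- 42) * w
  | (6, 4, 0)%N => 7 * b
  | (8, 1, 1)%N => a
  | (0, 1, 10)%N => u
  | (0, 8, 3)%N => u
  | (1, 3, 7)%N => 7 * u + b
  | (1, 10, 0)%N => b
  | (2, 5, 4)%N => 7 * u + 7 * b
  | (3, 0, 8)%N => w
  | (3, 7, 1)%N => 7 * b + w
  | (4, 2, 5)%N => 7 * u + 7 * w
  | (5, 4, 2)%N => 7 * b + 7 * w
  | (7, 1, 3)%N => u + 7 * w
  | (8, 3, 0)%N => b
  | (10, 0, 1)%N => w
  | _ => 0
  end.


Definition deg (t : nat * nat * nat) : nat := Nat.add (Nat.add t.1.1 t.1.2) t.2.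

Lemma split0 (R : realDomainType) (x : R) : 0 <= x -> x = 0 \/ 0 < x.
Proof. by rewrite le_eqVlt => /orP [/eqP <-|]; [left|right]. Qed.

Lemma count_lb (T : eqType) (P : pred T) (L s z : seq T) :
  perm_eq L (s ++ z) -> all P s -> (size s <= count P L)%N.
Proof.
move=> /permP -> hs; rewrite count_cat.
by move: hs; rewrite all_count => /eqP ->; apply: leq_addr.
Qed.

Lemma count_eq (T : eqType) (P : pred T) (L s z : seq T) :
  perm_eq L (s ++ z) -> all P s -> all (predC P) z -> count P L = size s.
Proof.
move=> /permP -> hs hz; rewrite count_cat.
move: hs; rewrite all_count => /eqP ->.
have : count P z = 0%N.
  by apply/eqP; rewrite -leqn0 leqNgt -has_count; apply/negP => /hasP [x hx px];
     move: (allP hz x hx); rewrite /= px.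
by move=> ->; rewrite addn0.
Qed.

Definition Ecoef (R : rcfType) (c : nat * nat * nat -> R) (i j : nat) : R :=
  match i, j with
  | 0, 0 => (-1) + c (0,0,7)%N
  | 0, 1 => c (0,1,3)%N + (- 7) * c (0,0,7)%N + c (0,1,10)%N
  | 0, 2 => (- 3) * c (0,1,3)%N + 21 * c (0,0,7)%N + c (0,2,6)%N + (- 10) * c (0,1,10)%N
  | 0, 3 => 3 * c (0,1,3)%N + c (0,3,2)%N + (- 35) * c (0,0,7)%N + (- 6) * c (0,2,6)%N + 45 * c (0,1,10)%N
  | 0, 4 => (- 1) * c (0,1,3)%N + (- 2) * c (0,3,2)%N + 35 * c (0,0,7)%N + 15 * c (0,2,6)%N + c (0,4,5)%N + (- 120) * c (0,1,10)%N
  | 0, 5 => c (0,3,2)%N + c (0,5,1)%N + (- 21) * c (0,0,7)%N + (- 20) * c (0,2,6)%N + (- 5) * c (0,4,5)%N + 210 * c (0,1,10)%N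
  | 0, 6 => (- 1) * c (0,5,1)%N + 7 * c (0,0,7)%N + 15 * c (0,2,6)%N + 10 * c (0,4,5)%N + c (0,6,4)%N + (- 252) * c (0,1,10)%N
  | 0, 7 => (- 1) * c (0,0,7)%N + c (0,7,0)%N + (- 6) * c (0,2,6)%N + (- 10) * c (0,4,5)%N + (- 4) * c (0,6,4)%N + 210 * c (0,1,10)%N
  | 0, 8 => c (0,2,6)%N + 5 * c (0,4,5)%N + 6 * c (0,6,4)%N + (- 120) * c (0,1,10)%N + c (0,8,3)%N
  | 0, 9 => (- 1) * c (0,4,5)%N + (- 4) * c (0,6,4)%N + 45 * c (0,1,10)%N + (- 3) * c (0,8,3)%N
  | 0, 10 => c (0,6,4)%N + (- 10) * c (0,1,10)%N + 3 * c (0,8,3)%N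
  | 0, 11 => c (0,1,10)%N + (- 1) * c (0,8,3)%N
  | 1, 0 => c (1,0,5)%N + (- 7) * c (0,0,7)%N
  | 1, 1 => c (1,1,1)%N + (- 3) * c (0,1,3)%N + (- 5) * c (1,0,5)%N + 42 * c (0,0,7)%N + c (1,1,8)%N + (- 10) * c (0,1,10)%N
  | 1, 2 => (- 1) * c (1,1,1)%N + 6 * c (0,1,3)%N + 10 * c (1,0,5)%N + (- 105) * c (0,0,7)%N + c (1,2,4)%N + (- 6) * c (0,2,6)%N + (- 8) * c (1,1,8)%N + 90 * c (0,1,10)%N
  | 1, 3 => (- 3) * c (0,1,3)%N + c (1,3,0)%N + (- 2) * c (0,3,2)%N + (- 10) * c (1,0,5)%N + 140 * c (0,0,7)%N + (- 4) * c (1,2,4)%N + 30 * c (0,2,6)%N + 28 * c (1,1,8)%N + (- 360) * c (0,1,10)%N + c (1,3,7)%N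
  | 1, 4 => 2 * c (0,3,2)%N + 5 * c (1,0,5)%N + (- 105) * c (0,0,7)%N + 6 * c (1,2,4)%N + (- 60) * c (0,2,6)%N + c (1,4,3)%N + (- 5) * c (0,4,5)%N + (- 56) * c (1,1,8)%N + 840 * c (0,1,10)%N + (- 7) * c (1,3,7)%N
  | 1, 5 => (- 1) * c (0,5,1)%N + (- 1) * c (1,0,5)%N + 42 * c (0,0,7)%N + (- 4) * c (1,2,4)%N + 60 * c (0,2,6)%N + (- 3) * c (1,4,3)%N + 20 * c (0,4,5)%N + 70 * c (1,1,8)%N + (- 1260) * c (0,1,10)%N + 21 * c (1,3,7)%N
  | 1, 6 => (- 7) * c (0,0,7)%N + c (1,2,4)%N + (- 30) * c (0,2,6)%N + 3 * c (1,4,3)%N + (- 30) * c (0,4,5)%N + c (1,6,2)%N + (- 4) * c (0,6,4)%N + (- 56) * c (1,1,8)%N + 1260 * c (0,1,10)%N + (- 35) * c (1,3,7)%N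
  | 1, 7 => 6 * c (0,2,6)%N + (- 1) * c (1,4,3)%N + 20 * c (0,4,5)%N + (- 2) * c (1,6,2)%N + 12 * c (0,6,4)%N + 28 * c (1,1,8)%N + (- 840) * c (0,1,10)%N + 35 * c (1,3,7)%N
  | 1, 8 => (- 5) * c (0,4,5)%N + c (1,6,2)%N + (- 12) * c (0,6,4)%N + (- 8) * c (1,1,8)%N + c (1,8,1)%N + 360 * c (0,1,10)%N + (- 3) * c (0,8,3)%N + (- 21) * c (1,3,7)%N
  | 1, 9 => 4 * c (0,6,4)%N + c (1,1,8)%N + (- 1) * c (1,8,1)%N + (- 90) * c (0,1,10)%N + 6 * c (0,8,3)%N + 7 * c (1,3,7)%N
  | 1, 10 => 10 * c (0,1,10)%N + (- 3) * c (0,8,3)%N + (- 1) * c (1,3,7)%N + c (1,10,0)%N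
  | 2, 0 => c (2,0,3)%N + (- 5) * c (1,0,5)%N + 21 * c (0,0,7)%N
  | 2, 1 => (- 1) * c (1,1,1)%N + 3 * c (0,1,3)%N + (- 3) * c (2,0,3)%N + 20 * c (1,0,5)%N + (- 105) * c (0,0,7)%N + c (2,1,6)%N + (- 8) * c (1,1,8)%N + 45 * c (0,1,10)%N
  | 2, 2 => (- 3) * c (0,1,3)%N + 3 * c (2,0,3)%N + (- 30) * c (1,0,5)%N + c (2,2,2)%N + 210 * c (0,0,7)%N + (- 4) * c (1,2,4)%N + 15 * c (0,2,6)%N + (- 6) * c (2,1,6)%N + 56 * c (1,1,8)%N + (- 360) * c (0,1,10)%N
  | 2, 3 => c (0,3,2)%N + (- 1) * c (2,0,3)%N + 20 * c (1,0,5)%N + (- 2) * c (2,2,2)%N + (- 210) * c (0,0,7)%N + 12 * c (1,2,4)%N + (- 60) * c (0,2,6)%N + 15 * c (2,1,6)%N + (- 168) * c (1,1,8)%N + c (2,3,5)%N + 1260 * c (0,1,10)%N + (- 7) * c (1,3,7)%N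
  | 2, 4 => (- 5) * c (1,0,5)%N + c (2,2,2)%N + 105 * c (0,0,7)%N + (- 12) * c (1,2,4)%N + c (2,4,1)%N + 90 * c (0,2,6)%N + (- 3) * c (1,4,3)%N + 10 * c (0,4,5)%N + (- 20) * c (2,1,6)%N + 280 * c (1,1,8)%N + (- 5) * c (2,3,5)%N + (- 2520) * c (0,1,10)%N + 42 * c (1,3,7)%N
  | 2, 5 => (- 21) * c (0,0,7)%N + 4 * c (1,2,4)%N + (- 1) * c (2,4,1)%N + (- 60) * c (0,2,6)%N + 6 * c (1,4,3)%N + (- 30) * c (0,4,5)%N + 15 * c (2,1,6)%N + (- 280) * c (1,1,8)%N + 10 * c (2,3,5)%N + 3150 * c (0,1,10)%N + (- 105) * c (1,3,7)%N + c (2,5,4)%N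
  | 2, 6 => 15 * c (0,2,6)%N + (- 3) * c (1,4,3)%N + c (2,6,0)%N + 30 * c (0,4,5)%N + (- 2) * c (1,6,2)%N + (- 6) * c (2,1,6)%N + 6 * c (0,6,4)%N + 168 * c (1,1,8)%N + (- 10) * c (2,3,5)%N + (- 2520) * c (0,1,10)%N + 140 * c (1,3,7)%N + (- 4) * c (2,5,4)%N
  | 2, 7 => (- 10) * c (0,4,5)%N + 2 * c (1,6,2)%N + c (2,1,6)%N + (- 12) * c (0,6,4)%N + (- 56) * c (1,1,8)%N + 5 * c (2,3,5)%N + 1260 * c (0,1,10)%N + (- 105) * c (1,3,7)%N + 6 * c (2,5,4)%N
  | 2, 8 => 6 * c (0,6,4)%N + 8 * c (1,1,8)%N + (- 1) * c (1,8,1)%N + (- 1) * c (2,3,5)%N + (- 360) * c (0,1,10)%N + 3 * c (0,8,3)%N + 42 * c (1,3,7)%N + (- 4) * c (2,5,4)%N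
  | 2, 9 => 45 * c (0,1,10)%N + (- 3) * c (0,8,3)%N + (- 7) * c (1,3,7)%N + c (2,5,4)%N
  | 3, 0 => c (3,0,1)%N + (- 3) * c (2,0,3)%N + 10 * c (1,0,5)%N + (- 35) * c (0,0,7)%N + c (3,0,8)%N
  | 3, 1 => (- 1) * c (0,1,3)%N + (- 1) * c (3,0,1)%N + 6 * c (2,0,3)%N + (- 30) * c (1,0,5)%N + 140 * c (0,0,7)%N + c (3,1,4)%N + (- 6) * c (2,1,6)%N + 28 * c (1,1,8)%N + (- 120) * c (0,1,10)%N + (- 8) * c (3,0,8)%N
  | 3, 2 => (- 3) * c (2,0,3)%N + c (3,2,0)%N + 30 * c (1,0,5)%N + (- 2) * c (2,2,2)%N + (- 210) * c (0,0,7)%N + 6 * c (1,2,4)%N + (- 20) * c (0,2,6)%N + (- 4) * c (3,1,4)%N + 30 * c (2,1,6)%N + (- 168) * c (1,1,8)%N + 840 * c (0,1,10)%N + 28 * c (3,0,8)%N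
  | 3, 3 => (- 10) * c (1,0,5)%N + 2 * c (2,2,2)%N + 140 * c (0,0,7)%N + (- 12) * c (1,2,4)%N + 60 * c (0,2,6)%N + 6 * c (3,1,4)%N + (- 60) * c (2,1,6)%N + c (3,3,3)%N + 420 * c (1,1,8)%N + (- 5) * c (2,3,5)%N + (- 2520) * c (0,1,10)%N + 21 * c (1,3,7)%N + (- 56) * c (3,0,8)%N
  | 3, 4 => (- 35) * c (0,0,7)%N + 6 * c (1,2,4)%N + (- 1) * c (2,4,1)%N + (- 60) * c (0,2,6)%N + 3 * c (1,4,3)%N + (- 4) * c (3,1,4)%N + (- 10) * c (0,4,5)%N + 60 * c (2,1,6)%N + (- 3) * c (3,3,3)%N + (- 560) * c (1,1,8)%N + 20 * c (2,3,5)%N + 4200 * c (0,1,10)%N + (- 105) * c (1,3,7)%N + 70 * c (3,0,8)%N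
  | 3, 5 => 20 * c (0,2,6)%N + (- 3) * c (1,4,3)%N + c (3,1,4)%N + 20 * c (0,4,5)%N + (- 30) * c (2,1,6)%N + 3 * c (3,3,3)%N + 420 * c (1,1,8)%N + (- 30) * c (2,3,5)%N + c (3,5,2)%N + (- 4200) * c (0,1,10)%N + 210 * c (1,3,7)%N + (- 4) * c (2,5,4)%N + (- 56) * c (3,0,8)%N
  | 3, 6 => (- 10) * c (0,4,5)%N + c (1,6,2)%N + 6 * c (2,1,6)%N + (- 1) * c (3,3,3)%N + (- 4) * c (0,6,4)%N + (- 168) * c (1,1,8)%N + 20 * c (2,3,5)%N + (- 2) * c (3,5,2)%N + 2520 * c (0,1,10)%N + (- 210) * c (1,3,7)%N + 12 * c (2,5,4)%N + 28 * c (3,0,8)%N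
  | 3, 7 => 4 * c (0,6,4)%N + 28 * c (1,1,8)%N + (- 5) * c (2,3,5)%N + c (3,5,2)%N + (- 840) * c (0,1,10)%N + 105 * c (1,3,7)%N + (- 12) * c (2,5,4)%N + (- 8) * c (3,0,8)%N + c (3,7,1)%N
  | 3, 8 => 120 * c (0,1,10)%N + (- 1) * c (0,8,3)%N + (- 21) * c (1,3,7)%N + 4 * c (2,5,4)%N + c (3,0,8)%N + (- 1) * c (3,7,1)%N
  | 4, 0 => (- 1) * c (3,0,1)%N + 3 * c (2,0,3)%N + (- 10) * c (1,0,5)%N + 35 * c (0,0,7)%N + c (4,0,6)%N + (- 8) * c (3,0,8)%N
  | 4, 1 => (- 3) * c (2,0,3)%N + 20 * c (1,0,5)%N + (- 105) * c (0,0,7)%N + c (4,1,2)%N + (- 4) * c (3,1,4)%N + 15 * c (2,1,6)%N + (- 56) * c (1,1,8)%N + (- 6) * c (4,0,6)%N + 210 * c (0,1,10)%N + 56 * c (3,0,8)%N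
  | 4, 2 => (- 10) * c (1,0,5)%N + c (2,2,2)%N + 105 * c (0,0,7)%N + (- 4) * c (1,2,4)%N + (- 2) * c (4,1,2)%N + 15 * c (0,2,6)%N + 12 * c (3,1,4)%N + (- 60) * c (2,1,6)%N + 280 * c (1,1,8)%N + 15 * c (4,0,6)%N + (- 1260) * c (0,1,10)%N + (- 168) * c (3,0,8)%N + c (4,2,5)%N
  | 4, 3 => (- 35) * c (0,0,7)%N + 4 * c (1,2,4)%N + c (4,1,2)%N + (- 30) * c (0,2,6)%N + (- 12) * c (3,1,4)%N + c (4,3,1)%N + 90 * c (2,1,6)%N + (- 3) * c (3,3,3)%N + (- 560) * c (1,1,8)%N + 10 * c (2,3,5)%N + (- 20) * c (4,0,6)%N + 3150 * c (0,1,10)%N + (- 35) * c (1,3,7)%N + 280 * c (3,0,8)%N + (- 5) * c (4,2,5)%N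
  | 4, 4 => 15 * c (0,2,6)%N + (- 1) * c (1,4,3)%N + 4 * c (3,1,4)%N + (- 1) * c (4,3,1)%N + 5 * c (0,4,5)%N + (- 60) * c (2,1,6)%N + 6 * c (3,3,3)%N + 560 * c (1,1,8)%N + (- 30) * c (2,3,5)%N + 15 * c (4,0,6)%N + (- 4200) * c (0,1,10)%N + 140 * c (1,3,7)%N + (- 280) * c (3,0,8)%N + 10 * c (4,2,5)%N
  | 4, 5 => (- 5) * c (0,4,5)%N + 15 * c (2,1,6)%N + (- 3) * c (3,3,3)%N + c (4,5,0)%N + (- 280) * c (1,1,8)%N + 30 * c (2,3,5)%N + (- 2) * c (3,5,2)%N + (- 6) * c (4,0,6)%N + 3150 * c (0,1,10)%N + (- 210) * c (1,3,7)%N + 6 * c (2,5,4)%N + 168 * c (3,0,8)%N + (- 10) * c (4,2,5)%N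
  | 4, 6 => c (0,6,4)%N + 56 * c (1,1,8)%N + (- 10) * c (2,3,5)%N + 2 * c (3,5,2)%N + c (4,0,6)%N + (- 1260) * c (0,1,10)%N + 140 * c (1,3,7)%N + (- 12) * c (2,5,4)%N + (- 56) * c (3,0,8)%N + 5 * c (4,2,5)%N
  | 4, 7 => 210 * c (0,1,10)%N + (- 35) * c (1,3,7)%N + 6 * c (2,5,4)%N + 8 * c (3,0,8)%N + (- 1) * c (3,7,1)%N + (- 1) * c (4,2,5)%N
  | 5, 0 => (- 1) * c (2,0,3)%N + 5 * c (1,0,5)%N + (- 21) * c (0,0,7)%N + c (5,0,4)%N + (- 6) * c (4,0,6)%N + 28 * c (3,0,8)%N
  | 5, 1 => (- 5) * c (1,0,5)%N + c (5,1,0)%N + 42 * c (0,0,7)%N + (- 2) * c (4,1,2)%N + 6 * c (3,1,4)%N + (- 20) * c (2,1,6)%N + (- 4) * c (5,0,4)%N + 70 * c (1,1,8)%N + 30 * c (4,0,6)%N + (- 252) * c (0,1,10)%N + (- 168) * c (3,0,8)%N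
  | 5, 2 => (- 21) * c (0,0,7)%N + c (1,2,4)%N + 2 * c (4,1,2)%N + (- 6) * c (0,2,6)%N + (- 12) * c (3,1,4)%N + 60 * c (2,1,6)%N + 6 * c (5,0,4)%N + (- 280) * c (1,1,8)%N + (- 60) * c (4,0,6)%N + c (5,2,3)%N + 1260 * c (0,1,10)%N + 420 * c (3,0,8)%N + (- 5) * c (4,2,5)%N
  | 5, 3 => 6 * c (0,2,6)%N + 6 * c (3,1,4)%N + (- 1) * c (4,3,1)%N + (- 60) * c (2,1,6)%N + 3 * c (3,3,3)%N + (- 4) * c (5,0,4)%N + 420 * c (1,1,8)%N + (- 10) * c (2,3,5)%N + 60 * c (4,0,6)%N + (- 3) * c (5,2,3)%N + (- 2520) * c (0,1,10)%N + 35 * c (1,3,7)%N + (- 560) * c (3,0,8)%N + 20 * c (4,2,5)%N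
  | 5, 4 => (- 1) * c (0,4,5)%N + 20 * c (2,1,6)%N + (- 3) * c (3,3,3)%N + c (5,0,4)%N + (- 280) * c (1,1,8)%N + 20 * c (2,3,5)%N + (- 30) * c (4,0,6)%N + 3 * c (5,2,3)%N + 2520 * c (0,1,10)%N + (- 105) * c (1,3,7)%N + 420 * c (3,0,8)%N + (- 30) * c (4,2,5)%N + c (5,4,2)%N
  | 5, 5 => 70 * c (1,1,8)%N + (- 10) * c (2,3,5)%N + c (3,5,2)%N + 6 * c (4,0,6)%N + (- 1) * c (5,2,3)%N + (- 1260) * c (0,1,10)%N + 105 * c (1,3,7)%N + (- 4) * c (2,5,4)%N + (- 168) * c (3,0,8)%N + 20 * c (4,2,5)%N + (- 2) * c (5,4,2)%N
  | 5, 6 => 252 * c (0,1,10)%N + (- 35) * c (1,3,7)%N + 4 * c (2,5,4)%N + 28 * c (3,0,8)%N + (- 5) * c (4,2,5)%N + c (5,4,2)%N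
  | 6, 0 => (- 1) * c (1,0,5)%N + 7 * c (0,0,7)%N + c (6,0,2)%N + (- 4) * c (5,0,4)%N + 15 * c (4,0,6)%N + (- 56) * c (3,0,8)%N
  | 6, 1 => (- 7) * c (0,0,7)%N + c (4,1,2)%N + (- 4) * c (3,1,4)%N + (- 2) * c (6,0,2)%N + 15 * c (2,1,6)%N + 12 * c (5,0,4)%N + (- 56) * c (1,1,8)%N + (- 60) * c (4,0,6)%N + 210 * c (0,1,10)%N + 280 * c (3,0,8)%N
  | 6, 2 => c (0,2,6)%N + 4 * c (3,1,4)%N + c (6,0,2)%N + (- 30) * c (2,1,6)%N + (- 12) * c (5,0,4)%N + c (6,2,1)%N + 168 * c (1,1,8)%N + 90 * c (4,0,6)%N + (- 3) * c (5,2,3)%N + (- 840) * c (0,1,10)%N + (- 560) * c (3,0,8)%N + 10 * c (4,2,5)%N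
  | 6, 3 => 15 * c (2,1,6)%N + (- 1) * c (3,3,3)%N + 4 * c (5,0,4)%N + (- 1) * c (6,2,1)%N + (- 168) * c (1,1,8)%N + 5 * c (2,3,5)%N + (- 60) * c (4,0,6)%N + 6 * c (5,2,3)%N + 1260 * c (0,1,10)%N + (- 21) * c (1,3,7)%N + 560 * c (3,0,8)%N + (- 30) * c (4,2,5)%N
  | 6, 4 => 56 * c (1,1,8)%N + (- 5) * c (2,3,5)%N + 15 * c (4,0,6)%N + (- 3) * c (5,2,3)%N + c (6,4,0)%N + (- 840) * c (0,1,10)%N + 42 * c (1,3,7)%N + (- 280) * c (3,0,8)%N + 30 * c (4,2,5)%N + (- 2) * c (5,4,2)%N
  | 6, 5 => 210 * c (0,1,10)%N + (- 21) * c (1,3,7)%N + c (2,5,4)%N + 56 * c (3,0,8)%N + (- 10) * c (4,2,5)%N + 2 * c (5,4,2)%N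
  | 7, 0 => (- 1) * c (0,0,7)%N + c (7,0,0)%N + (- 2) * c (6,0,2)%N + 6 * c (5,0,4)%N + (- 20) * c (4,0,6)%N + 70 * c (3,0,8)%N
  | 7, 1 => c (3,1,4)%N + 2 * c (6,0,2)%N + (- 6) * c (2,1,6)%N + (- 12) * c (5,0,4)%N + 28 * c (1,1,8)%N + 60 * c (4,0,6)%N + (- 120) * c (0,1,10)%N + (- 280) * c (3,0,8)%N + c (7,1,3)%N
  | 7, 2 => 6 * c (2,1,6)%N + 6 * c (5,0,4)%N + (- 1) * c (6,2,1)%N + (- 56) * c (1,1,8)%N + (- 60) * c (4,0,6)%N + 3 * c (5,2,3)%N + 360 * c (0,1,10)%N + 420 * c (3,0,8)%N + (- 10) * c (4,2,5)%N + (- 3) * c (7,1,3)%N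
  | 7, 3 => 28 * c (1,1,8)%N + (- 1) * c (2,3,5)%N + 20 * c (4,0,6)%N + (- 3) * c (5,2,3)%N + (- 360) * c (0,1,10)%N + 7 * c (1,3,7)%N + (- 280) * c (3,0,8)%N + 20 * c (4,2,5)%N + 3 * c (7,1,3)%N
  | 7, 4 => 120 * c (0,1,10)%N + (- 7) * c (1,3,7)%N + 70 * c (3,0,8)%N + (- 10) * c (4,2,5)%N + c (5,4,2)%N + (- 1) * c (7,1,3)%N
  | 8, 0 => c (6,0,2)%N + (- 4) * c (5,0,4)%N + 15 * c (4,0,6)%N + (- 56) * c (3,0,8)%N
  | 8, 1 => c (2,1,6)%N + 4 * c (5,0,4)%N + (- 8) * c (1,1,8)%N + (- 30) * c (4,0,6)%N + c (8,1,1)%N + 45 * c (0,1,10)%N + 168 * c (3,0,8)%N + (- 3) * c (7,1,3)%N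
  | 8, 2 => 8 * c (1,1,8)%N + 15 * c (4,0,6)%N + (- 1) * c (5,2,3)%N + (- 1) * c (8,1,1)%N + (- 90) * c (0,1,10)%N + (- 168) * c (3,0,8)%N + 5 * c (4,2,5)%N + 6 * c (7,1,3)%N
  | 8, 3 => 45 * c (0,1,10)%N + (- 1) * c (1,3,7)%N + 56 * c (3,0,8)%N + (- 5) * c (4,2,5)%N + (- 3) * c (7,1,3)%N + c (8,3,0)%N
  | 9, 0 => c (5,0,4)%N + (- 6) * c (4,0,6)%N + 28 * c (3,0,8)%N
  | 9, 1 => c (1,1,8)%N + 6 * c (4,0,6)%N + (- 1) * c (8,1,1)%N + (- 10) * c (0,1,10)%N + (- 56) * c (3,0,8)%N + 3 * c (7,1,3)%N
  | 9, 2 => 10 * c (0,1,10)%N + 28 * c (3,0,8)%N + (- 1) * c (4,2,5)%N + (- 3) * c (7,1,3)%N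
  | 10, 0 => c (4,0,6)%N + (- 8) * c (3,0,8)%N + c (10,0,1)%N
  | 10, 1 => c (0,1,10)%N + 8 * c (3,0,8)%N + (- 1) * c (7,1,3)%N + (- 1) * c (10,0,1)%N
  | 11, 0 => c (3,0,8)%N + (- 1) * c (10,0,1)%N
  | _, _ => 0
  end.



Lemma plane_E (R : rcfType) (c : nat * nat * nat -> R) :
  (forall x y : R, \sum_(t <- Linv) c t * mono t x y (1 - x - y) = 1) ->
  forall x y : R, \sum_(0 <= i < 12) \sum_(0 <= j < 12) Ecoef c i j * (x ^+ i * y ^+ j) = 0.
Proof.
move=> H x y.
have -> : \sum_(0 <= i < 12) \sum_(0 <= j < 12) Ecoef c i j * (x ^+ i * y ^+ j) =
   \sum_(t <- Linv) c t * mono t x y (1 - x - y) - 1.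
  rewrite /Linv !big_cons big_nil /mono /index_iota subn0 /= ?big_cons ?big_nil /=.
  ring.
by rewrite H subrr.
Qed.

Lemma plane_solve (R : rcfType) (c : nat * nat * nat -> R) :
  (forall x y : R, \sum_(t <- Linv) c t * mono t x y (1 - x - y) = 1) ->
  all (fun t => c t == val t (c (8,1,1)%N) (c (0,1,10)%N) (c (1,10,0)%N) (c (3,0,8)%N)) Linv.
Proof.
move=> H.
have hE := @id2 _ 12 (Ecoef c) (plane_E H).

have h_0_0_7 : c (0,0,7)%N = 1.
  move: (hE 0 0 isT isT); rewrite /Ecoef /=; lra.
have h_0_1_3 : c (0,1,3)%N = 7 + (- 1) * c (0,1,10)%N.
  move: (hE 0 1 isT isT); rewrite /Ecoef /= h_0_0_7; lra.
have h_0_2_6 : c (0,2,6)%N = 7 * c (0,1,10)%N.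
  move: (hE 0 2 isT isT); rewrite /Ecoef /= h_0_1_3 h_0_0_7; lra.
have h_0_3_2 : c (0,3,2)%N = 14.
  move: (hE 0 3 isT isT); rewrite /Ecoef /= h_0_1_3 h_0_0_7 h_0_2_6; lra.
have h_0_4_5 : c (0,4,5)%N = 14 * c (0,1,10)%N.
  move: (hE 0 4 isT isT); rewrite /Ecoef /= h_0_1_3 h_0_3_2 h_0_0_7 h_0_2_6; lra.
have h_0_5_1 : c (0,5,1)%N = 7.
  move: (hE 0 5 isT isT); rewrite /Ecoef /= h_0_3_2 h_0_0_7 h_0_2_6 h_0_4_5; lra.
have h_0_6_4 : c (0,6,4)%N = 7 * c (0,1,10)%N.
  move: (hE 0 6 isT isT); rewrite /Ecoef /= h_0_5_1 h_0_0_7 h_0_2_6 h_0_4_5; lra.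
have h_0_7_0 : c (0,7,0)%N = 1.
  move: (hE 0 7 isT isT); rewrite /Ecoef /= h_0_0_7 h_0_2_6 h_0_4_5 h_0_6_4; lra.
have h_0_8_3 : c (0,8,3)%N = c (0,1,10)%N.
  move: (hE 0 8 isT isT); rewrite /Ecoef /= h_0_2_6 h_0_4_5 h_0_6_4; lra.
have h_1_0_5 : c (1,0,5)%N = 7.
  move: (hE 1 0 isT isT); rewrite /Ecoef /= h_0_0_7; lra.
have h_1_3_7 : c (1,3,7)%N = 7 * c (0,1,10)%N + c (1,10,0)%N.
  move: (hE 1 10 isT isT); rewrite /Ecoef /= h_0_8_3; lra.
have h_2_0_3 : c (2,0,3)%N = 14.
  move: (hE 2 0 isT isT); rewrite /Ecoef /= h_1_0_5 h_0_0_7; lra.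
have h_2_5_4 : c (2,5,4)%N = 7 * c (0,1,10)%N + 7 * c (1,10,0)%N.
  move: (hE 2 9 isT isT); rewrite /Ecoef /= h_0_8_3 h_1_3_7; lra.
have h_3_0_1 : c (3,0,1)%N = 7 + (- 1) * c (3,0,8)%N.
  move: (hE 3 0 isT isT); rewrite /Ecoef /= h_2_0_3 h_1_0_5 h_0_0_7; lra.
have h_3_7_1 : c (3,7,1)%N = 7 * c (1,10,0)%N + c (3,0,8)%N.
  move: (hE 3 8 isT isT); rewrite /Ecoef /= h_0_8_3 h_1_3_7 h_2_5_4; lra.
have h_4_0_6 : c (4,0,6)%N = 7 * c (3,0,8)%N.
  move: (hE 4 0 isT isT); rewrite /Ecoef /= h_3_0_1 h_2_0_3 h_1_0_5 h_0_0_7; lra.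
have h_4_2_5 : c (4,2,5)%N = 7 * c (0,1,10)%N + 7 * c (3,0,8)%N.
  move: (hE 4 7 isT isT); rewrite /Ecoef /= h_1_3_7 h_2_5_4 h_3_7_1; lra.
have h_5_0_4 : c (5,0,4)%N = 14 * c (3,0,8)%N.
  move: (hE 5 0 isT isT); rewrite /Ecoef /= h_2_0_3 h_1_0_5 h_0_0_7 h_4_0_6; lra.
have h_5_4_2 : c (5,4,2)%N = 7 * c (1,10,0)%N + 7 * c (3,0,8)%N.
  move: (hE 5 6 isT isT); rewrite /Ecoef /= h_1_3_7 h_2_5_4 h_4_2_5; lra.
have h_6_0_2 : c (6,0,2)%N = 7 * c (3,0,8)%N.
  move: (hE 6 0 isT isT); rewrite /Ecoef /= h_1_0_5 h_0_0_7 h_5_0_4 h_4_0_6; lra.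
have h_7_0_0 : c (7,0,0)%N = 1.
  move: (hE 7 0 isT isT); rewrite /Ecoef /= h_0_0_7 h_6_0_2 h_5_0_4 h_4_0_6; lra.
have h_7_1_3 : c (7,1,3)%N = c (0,1,10)%N + 7 * c (3,0,8)%N.
  move: (hE 7 4 isT isT); rewrite /Ecoef /= h_1_3_7 h_4_2_5 h_5_4_2; lra.
have h_8_3_0 : c (8,3,0)%N = c (1,10,0)%N.
  move: (hE 8 3 isT isT); rewrite /Ecoef /= h_1_3_7 h_4_2_5 h_7_1_3; lra.
have h_1_1_8 : c (1,1,8)%N = c (8,1,1)%N + 7 * c (0,1,10)%N + (- 7) * c (3,0,8)%N.
  move: (hE 9 1 isT isT); rewrite /Ecoef /= h_4_0_6 h_7_1_3; lra.
have h_10_0_1 : c (10,0,1)%N = c (3,0,8)%N.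
  move: (hE 10 0 isT isT); rewrite /Ecoef /= h_4_0_6; lra.
have h_1_1_1 : c (1,1,1)%N = 14 + (- 1) * c (8,1,1)%N + 7 * c (3,0,8)%N.
  move: (hE 1 1 isT isT); rewrite /Ecoef /= h_0_1_3 h_1_0_5 h_0_0_7 h_1_1_8; lra.
have h_1_2_4 : c (1,2,4)%N = 7 + 7 * c (8,1,1)%N + 14 * c (0,1,10)%N + (- 49) * c (3,0,8)%N.
  move: (hE 1 2 isT isT); rewrite /Ecoef /= h_1_1_1 h_0_1_3 h_1_0_5 h_0_0_7 h_0_2_6 h_1_1_8; lra.
have h_1_3_0 : c (1,3,0)%N = 7 + (- 1) * c (1,10,0)%N.
  move: (hE 1 3 isT isT); rewrite /Ecoef /= h_0_1_3 h_0_3_2 h_1_0_5 h_0_0_7 h_1_2_4 h_0_2_6 h_1_1_8 h_1_3_7; lra.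
have h_1_4_3 : c (1,4,3)%N = 14 * c (8,1,1)%N + 7 * c (0,1,10)%N + 7 * c (1,10,0)%N + (- 98) * c (3,0,8)%N.
  move: (hE 1 4 isT isT); rewrite /Ecoef /= h_0_3_2 h_1_0_5 h_0_0_7 h_1_2_4 h_0_2_6 h_0_4_5 h_1_1_8 h_1_3_7; lra.
have h_1_6_2 : c (1,6,2)%N = 7 * c (8,1,1)%N + 14 * c (1,10,0)%N + (- 49) * c (3,0,8)%N.
  move: (hE 1 6 isT isT); rewrite /Ecoef /= h_0_0_7 h_1_2_4 h_0_2_6 h_1_4_3 h_0_4_5 h_0_6_4 h_1_1_8 h_1_3_7; lra.
have h_1_8_1 : c (1,8,1)%N = c (8,1,1)%N + 7 * c (1,10,0)%N + (- 7) * c (3,0,8)%N.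
  move: (hE 1 8 isT isT); rewrite /Ecoef /= h_0_4_5 h_1_6_2 h_0_6_4 h_1_1_8 h_0_8_3 h_1_3_7; lra.
have h_2_1_6 : c (2,1,6)%N = 7 * c (8,1,1)%N + 14 * c (0,1,10)%N + (- 49) * c (3,0,8)%N.
  move: (hE 2 1 isT isT); rewrite /Ecoef /= h_1_1_1 h_0_1_3 h_2_0_3 h_1_0_5 h_0_0_7 h_1_1_8; lra.
have h_2_2_2 : c (2,2,2)%N = 7 + 14 * c (8,1,1)%N + (- 98) * c (3,0,8)%N.
  move: (hE 2 2 isT isT); rewrite /Ecoef /= h_0_1_3 h_2_0_3 h_1_0_5 h_0_0_7 h_1_2_4 h_0_2_6 h_2_1_6 h_1_1_8; lra.
have h_2_3_5 : c (2,3,5)%N = 7 * c (8,1,1)%N + 7 * c (0,1,10)%N + 7 * c (1,10,0)%N + (- 49) * c (3,0,8)%N.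
  move: (hE 2 3 isT isT); rewrite /Ecoef /= h_0_3_2 h_2_0_3 h_1_0_5 h_2_2_2 h_0_0_7 h_1_2_4 h_0_2_6 h_2_1_6 h_1_1_8 h_1_3_7; lra.
have h_2_4_1 : c (2,4,1)%N = 7 + 7 * c (8,1,1)%N + 14 * c (1,10,0)%N + (- 49) * c (3,0,8)%N.
  move: (hE 2 4 isT isT); rewrite /Ecoef /= h_1_0_5 h_2_2_2 h_0_0_7 h_1_2_4 h_0_2_6 h_1_4_3 h_0_4_5 h_2_1_6 h_1_1_8 h_2_3_5 h_1_3_7; lra.
have h_2_6_0 : c (2,6,0)%N = 7 * c (1,10,0)%N.
  move: (hE 2 6 isT isT); rewrite /Ecoef /= h_0_2_6 h_1_4_3 h_0_4_5 h_1_6_2 h_2_1_6 h_0_6_4 h_1_1_8 h_2_3_5 h_1_3_7 h_2_5_4; lra.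
have h_3_1_4 : c (3,1,4)%N = 14 * c (8,1,1)%N + 7 * c (0,1,10)%N + (- 91) * c (3,0,8)%N.
  move: (hE 3 1 isT isT); rewrite /Ecoef /= h_0_1_3 h_3_0_1 h_2_0_3 h_1_0_5 h_0_0_7 h_2_1_6 h_1_1_8; lra.
have h_3_2_0 : c (3,2,0)%N = 14.
  move: (hE 3 2 isT isT); rewrite /Ecoef /= h_2_0_3 h_1_0_5 h_2_2_2 h_0_0_7 h_1_2_4 h_0_2_6 h_3_1_4 h_2_1_6 h_1_1_8; lra.
have h_3_3_3 : c (3,3,3)%N = 7 * c (8,1,1)%N + 14 * c (0,1,10)%N + 14 * c (1,10,0)%N + (- 35) * c (3,0,8)%N.
  move: (hE 3 3 isT isT); rewrite /Ecoef /= h_1_0_5 h_2_2_2 h_0_0_7 h_1_2_4 h_0_2_6 h_3_1_4 h_2_1_6 h_1_1_8 h_2_3_5 h_1_3_7; lra.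
have h_3_5_2 : c (3,5,2)%N = 7 * c (8,1,1)%N + 7 * c (1,10,0)%N + (- 42) * c (3,0,8)%N.
  move: (hE 3 5 isT isT); rewrite /Ecoef /= h_0_2_6 h_1_4_3 h_3_1_4 h_0_4_5 h_2_1_6 h_3_3_3 h_1_1_8 h_2_3_5 h_1_3_7 h_2_5_4; lra.
have h_4_1_2 : c (4,1,2)%N = 7 + 7 * c (8,1,1)%N + (- 35) * c (3,0,8)%N.
  move: (hE 4 1 isT isT); rewrite /Ecoef /= h_2_0_3 h_1_0_5 h_0_0_7 h_3_1_4 h_2_1_6 h_1_1_8 h_4_0_6; lra.
have h_4_3_1 : c (4,3,1)%N = 14 * c (8,1,1)%N + 7 * c (1,10,0)%N + (- 91) * c (3,0,8)%N.
  move: (hE 4 3 isT isT); rewrite /Ecoef /= h_0_0_7 h_1_2_4 h_4_1_2 h_0_2_6 h_3_1_4 h_2_1_6 h_3_3_3 h_1_1_8 h_2_3_5 h_4_0_6 h_1_3_7 h_4_2_5; lra.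
have h_4_5_0 : c (4,5,0)%N = 14 * c (1,10,0)%N.
  move: (hE 4 5 isT isT); rewrite /Ecoef /= h_0_4_5 h_2_1_6 h_3_3_3 h_1_1_8 h_2_3_5 h_3_5_2 h_4_0_6 h_1_3_7 h_2_5_4 h_4_2_5; lra.
have h_5_1_0 : c (5,1,0)%N = 7.
  move: (hE 5 1 isT isT); rewrite /Ecoef /= h_1_0_5 h_0_0_7 h_4_1_2 h_3_1_4 h_2_1_6 h_5_0_4 h_1_1_8 h_4_0_6; lra.
have h_5_2_3 : c (5,2,3)%N = 7 * c (8,1,1)%N + 7 * c (0,1,10)%N + (- 42) * c (3,0,8)%N.
  move: (hE 5 2 isT isT); rewrite /Ecoef /= h_0_0_7 h_1_2_4 h_4_1_2 h_0_2_6 h_3_1_4 h_2_1_6 h_5_0_4 h_1_1_8 h_4_0_6 h_4_2_5; lra.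
have h_6_2_1 : c (6,2,1)%N = 7 * c (8,1,1)%N + (- 35) * c (3,0,8)%N.
  move: (hE 6 2 isT isT); rewrite /Ecoef /= h_0_2_6 h_3_1_4 h_6_0_2 h_2_1_6 h_5_0_4 h_1_1_8 h_4_0_6 h_5_2_3 h_4_2_5; lra.
have h_6_4_0 : c (6,4,0)%N = 7 * c (1,10,0)%N.
  move: (hE 6 4 isT isT); rewrite /Ecoef /= h_1_1_8 h_2_3_5 h_4_0_6 h_5_2_3 h_1_3_7 h_4_2_5 h_5_4_2; lra.
rewrite /= h_1_1_1 h_0_1_3 h_1_3_0 h_3_0_1 h_0_3_2 h_2_0_3 h_3_2_0 h_0_5_1 h_1_0_5 h_2_2_2 h_5_1_0 h_0_0_7 h_0_7_0 h_1_2_4 h_2_4_1 h_4_1_2 h_7_0_0 h_0_2_6 h_1_4_3 h_2_6_0 h_3_1_4 h_4_3_1 h_6_0_2 h_0_4_5 h_1_6_2 h_2_1_6 h_3_3_3 h_4_5_0 h_5_0_4 h_6_2_1 h_0_6_4 h_1_1_8 h_1_8_1 h_2_3_5 h_3_5_2 h_4_0_6 h_5_2_3 h_6_4_0 h_0_8_3 h_1_3_7 h_2_5_4 h_3_7_1 h_4_2_5 h_5_4_2 h_7_1_3 h_8_3_0 h_10_0_1.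
by rewrite !eqxx.
Qed.

Lemma case7 (R : rcfType) (a u b w : R) :
  (forall t, t \in Linv -> (8 <= deg t)%N -> val t a u b w = 0) ->
  count (fun t => val t a u b w != 0) Linv = 17%N.
Proof.
move=> hz.
have ha : a = 0 := hz (8,1,1)%N isT isT.
have hu : u = 0 := hz (0,1,10)%N isT isT.
have hb : b = 0 := hz (1,10,0)%N isT isT.
have hw : w = 0 := hz (3,0,8)%N isT isT.
apply: (@count_eq _ _ Linv [:: (1,1,1)%N; (0,1,3)%N; (1,3,0)%N; (3,0,1)%N; (0,3,2)%N; (2,0,3)%N; (3,2,0)%N; (0,5,1)%N; (1,0,5)%N; (2,2,2)%N; (5,1,0)%N; (0,0,7)%N; (0,7,0)%N; (1,2,4)%N; (2,4,1)%N; (4,1,2)%N; (7,0,0)%N] [:: (0,2,6)%N; (1,4,3)%N; (2,6,0)%N; (3,1,4)%N; (4,3,1)%N; (6,0,2)%N; (0,4,5)%N; (1,6,2)%N; (2,1,6)%N; (3,3,3)%N; (4,5,0)%N; (5,0,4)%N; (6,2,1)%N; (0,6,4)%N; (1,1,8)%N; (1,8,1)%N; (2,3,5)%N; (3,5,2)%N; (4,0,6)%N; (5,2,3)%N; (6,4,0)%N; (8,1,1)%N; (0,1,10)%N; (0,8,3)%N; (1,3,7)%N; (1,10,0)%N; (2,5,4)%N; (3,0,8)%N; (3,7,1)%N; (4,2,5)%N; (5,4,2)%N; (7,1,3)%N; (8,3,0)%N; (10,0,1)%N]); first by vm_compute.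
- rewrite /=; repeat (apply/andP; split); try done; apply: lt0r_neq0; lra.
- rewrite /=; repeat (apply/andP; split); try done; rewrite negbK; apply/eqP; lra.
Qed.

Lemma case8 (R : rcfType) (a u b w : R) :
  (forall t, t \in Linv -> (9 <= deg t)%N -> val t a u b w = 0) ->
  has (fun t => (deg t == 8)%N && (val t a u b w != 0)) Linv -> False.
Proof.
move=> hz.
have ha : a = 0 := hz (8,1,1)%N isT isT.
have hu : u = 0 := hz (0,1,10)%N isT isT.
have hb : b = 0 := hz (1,10,0)%N isT isT.
have hw : w = 0 := hz (3,0,8)%N isT isT.
rewrite /= ?ha ?hu ?hb ?hw ?mulr0 ?addr0 ?add0r ?eqxx //.
Qed.

Lemma case9 (R : rcfType) (a u b w : R) :
  (forall t, t \in Linv -> (10 <= deg t)%N -> val t a u b w = 0) ->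
  has (fun t => (deg t == 9)%N && (val t a u b w != 0)) Linv -> False.
Proof.
move=> hz.
have ha : a = 0 := hz (8,1,1)%N isT isT.
have hu : u = 0 := hz (0,1,10)%N isT isT.
have hb : b = 0 := hz (1,10,0)%N isT isT.
have hw : w = 0 := hz (3,0,8)%N isT isT.
rewrite /= ?ha ?hu ?hb ?hw ?mulr0 ?addr0 ?add0r ?eqxx //.
Qed.

Lemma case10 (R : rcfType) (a u b w : R) :
  (forall t, t \in Linv -> 0 <= val t a u b w) ->
  (forall t, t \in Linv -> (11 <= deg t)%N -> val t a u b w = 0) ->
  has (fun t => (deg t == 10)%N && (val t a u b w != 0)) Linv ->
  count (fun t => val t a u b w != 0) Linv = 29%N \/
  count (fun t => val t a u b w != 0) Linv = 30%N.
Proof.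
move=> hp hz hl.
have hu : u = 0 := hz (0,1,10)%N isT isT.
have hb : b = 0 := hz (1,10,0)%N isT isT.
have hw : w = 0 := hz (3,0,8)%N isT isT.
have pa : 0 <= a := hp (8,1,1)%N isT.
have p1 : 0 <= 14 + (- 1) * a + 7 * w := hp (1,1,1)%N isT.
case: (split0 pa) => ha.
  by move: hl; rewrite /= ?ha ?hu ?hb ?hw ?mulr0 ?addr0 ?add0r ?eqxx.
case: (ltgtP a 14) => h14.
- right; apply: (@count_eq _ _ Linv [:: (1,1,1)%N; (0,1,3)%N; (1,3,0)%N; (3,0,1)%N; (0,3,2)%N; (2,0,3)%N; (3,2,0)%N; (0,5,1)%N; (1,0,5)%N; (2,2,2)%N; (5,1,0)%N; (0,0,7)%N; (0,7,0)%N; (1,2,4)%N; (2,4,1)%N; (4,1,2)%N; (7,0,0)%N; (1,4,3)%N; (3,1,4)%N; (4,3,1)%N; (1,6,2)%N; (2,1,6)%N; (3,3,3)%N; (6,2,1)%N; (1,1,8)%N; (1,8,1)%N; (2,3,5)%N; (3,5,2)%N; (5,2,3)%N; (8,1,1)%N] [:: (0,2,6)%N; (2,6,0)%N; (6,0,2)%N; (0,4,5)%N; (4,5,0)%N; (5,0,4)%N; (0,6,4)%N; (4,0,6)%N; (6,4,0)%N; (0,1,10)%N; (0,8,3)%N; (1,3,7)%N; (1,10,0)%N; (2,5,4)%N; (3,0,8)%N; (3,7,1)%N; (4,2,5)%N; (5,4,2)%N; (7,1,3)%N; (8,3,0)%N; (10,0,1)%N]); first by vm_compute.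
  + rewrite /=; repeat (apply/andP; split); try done; apply: lt0r_neq0; lra.
  + rewrite /=; repeat (apply/andP; split); try done; rewrite negbK; apply/eqP; lra.
- exfalso; lra.
- left; apply: (@count_eq _ _ Linv [:: (0,1,3)%N; (1,3,0)%N; (3,0,1)%N; (0,3,2)%N; (2,0,3)%N; (3,2,0)%N; (0,5,1)%N; (1,0,5)%N; (2,2,2)%N; (5,1,0)%N; (0,0,7)%N; (0,7,0)%N; (1,2,4)%N; (2,4,1)%N; (4,1,2)%N; (7,0,0)%N; (1,4,3)%N; (3,1,4)%N; (4,3,1)%N; (1,6,2)%N; (2,1,6)%N; (3,3,3)%N; (6,2,1)%N; (1,1,8)%N; (1,8,1)%N; (2,3,5)%N; (3,5,2)%N; (5,2,3)%N; (8,1,1)%N] [:: (1,1,1)%N; (0,2,6)%N; (2,6,0)%N; (6,0,2)%N; (0,4,5)%N; (4,5,0)%N; (5,0,4)%N; (0,6,4)%N; (4,0,6)%N; (6,4,0)%N; (0,1,10)%N; (0,8,3)%N; (1,3,7)%N; (1,10,0)%N; (2,5,4)%N; (3,0,8)%N; (3,7,1)%N; (4,2,5)%N; (5,4,2)%N; (7,1,3)%N; (8,3,0)%N; (10,0,1)%N]); first by vm_compute.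
  + rewrite /=; repeat (apply/andP; split); try done; apply: lt0r_neq0; lra.
  + rewrite /=; repeat (apply/andP; split); try done; rewrite negbK; apply/eqP; lra.
Qed.

Lemma case11 (R : rcfType) (a u b w : R) :
  (forall t, t \in Linv -> 0 <= val t a u b w) ->
  has (fun t => (deg t == 11)%N && (val t a u b w != 0)) Linv ->
  (31 <= count (fun t => (val t a u b w != 0)%R) Linv)%N.
Proof.
move=> hp hl.
have f_1_1_1 : 0 <= 14 + (- 1) * a + 7 * w := hp (1,1,1)%N isT.
have f_0_1_3 : 0 <= 7 + (- 1) * u := hp (0,1,3)%N isT.
have f_1_3_0 : 0 <= 7 + (- 1) * b := hp (1,3,0)%N isT.
have f_3_0_1 : 0 <= 7 + (- 1) * w := hp (3,0,1)%N isT.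
have f_2_2_2 : 0 <= 7 + 14 * a + (- 98) * w := hp (2,2,2)%N isT.
have f_0_2_6 : 0 <= 7 * u := hp (0,2,6)%N isT.
have f_1_4_3 : 0 <= 14 * a + 7 * u + 7 * b + (- 98) * w := hp (1,4,3)%N isT.
have f_2_6_0 : 0 <= 7 * b := hp (2,6,0)%N isT.
have f_3_1_4 : 0 <= 14 * a + 7 * u + (- 91) * w := hp (3,1,4)%N isT.
have f_4_3_1 : 0 <= 14 * a + 7 * b + (- 91) * w := hp (4,3,1)%N isT.
have f_6_0_2 : 0 <= 7 * w := hp (6,0,2)%N isT.
have f_1_6_2 : 0 <= 7 * a + 14 * b + (- 49) * w := hp (1,6,2)%N isT.
have f_2_1_6 : 0 <= 7 * a + 14 * u + (- 49) * w := hp (2,1,6)%N isT.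
have f_6_2_1 : 0 <= 7 * a + (- 35) * w := hp (6,2,1)%N isT.
have pa : 0 <= a := hp (8,1,1)%N isT.
have pu : 0 <= u := hp (0,1,10)%N isT.
have pb : 0 <= b := hp (1,10,0)%N isT.
have pw : 0 <= w := hp (3,0,8)%N isT.
case: (split0 pa) => ha; case: (split0 pu) => hu; case: (split0 pb) => hb; case: (split0 pw) => hw.
- by move: hl; rewrite /= ?hu ?hb ?hw ?mulr0 ?addr0 ?add0r ?eqxx.
- exfalso; lra.
- apply: (@leq_trans (size [:: (0,3,2)%N; (2,0,3)%N; (3,2,0)%N; (0,5,1)%N; (1,0,5)%N; (5,1,0)%N; (0,0,7)%N; (0,7,0)%N; (7,0,0)%N; (1,1,1)%N; (0,1,3)%N; (3,0,1)%N; (2,2,2)%N; (1,2,4)%N; (2,4,1)%N; (4,1,2)%N; (1,4,3)%N; (2,6,0)%N; (4,3,1)%N; (1,6,2)%N; (3,3,3)%N; (4,5,0)%N; (1,8,1)%N; (2,3,5)%N; (3,5,2)%N; (6,4,0)%N; (1,3,7)%N; (1,10,0)%N; (2,5,4)%N; (3,7,1)%N; (5,4,2)%N])); first by [].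
  apply: (@count_lb _ _ Linv [:: (0,3,2)%N; (2,0,3)%N; (3,2,0)%N; (0,5,1)%N; (1,0,5)%N; (5,1,0)%N; (0,0,7)%N; (0,7,0)%N; (7,0,0)%N; (1,1,1)%N; (0,1,3)%N; (3,0,1)%N; (2,2,2)%N; (1,2,4)%N; (2,4,1)%N; (4,1,2)%N; (1,4,3)%N; (2,6,0)%N; (4,3,1)%N; (1,6,2)%N; (3,3,3)%N; (4,5,0)%N; (1,8,1)%N; (2,3,5)%N; (3,5,2)%N; (6,4,0)%N; (1,3,7)%N; (1,10,0)%N; (2,5,4)%N; (3,7,1)%N; (5,4,2)%N] [:: (1,3,0)%N; (0,2,6)%N; (3,1,4)%N; (6,0,2)%N; (0,4,5)%N; (2,1,6)%N; (5,0,4)%N; (6,2,1)%N; (0,6,4)%N; (1,1,8)%N; (4,0,6)%N; (5,2,3)%N; (8,1,1)%N; (0,1,10)%N; (0,8,3)%N; (3,0,8)%N; (4,2,5)%N; (7,1,3)%N; (8,3,0)%N; (10,0,1)%N]); first by vm_compute.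
  rewrite /=.
  apply/andP; split; first by rewrite ?oner_eq0 ?pnatr_eq0.
  apply/andP; split; first by rewrite ?oner_eq0 ?pnatr_eq0.
  apply/andP; split; first by rewrite ?oner_eq0 ?pnatr_eq0.
  apply/andP; split; first by rewrite ?oner_eq0 ?pnatr_eq0.
  apply/andP; split; first by rewrite ?oner_eq0 ?pnatr_eq0.
  apply/andP; split; first by rewrite ?oner_eq0 ?pnatr_eq0.
  apply/andP; split; first by rewrite ?oner_eq0 ?pnatr_eq0.
  apply/andP; split; first by rewrite ?oner_eq0 ?pnatr_eq0.
  apply/andP; split; first by rewrite ?oner_eq0 ?pnatr_eq0.
  apply/andP; split; first by apply: lt0r_neq0; clear -ha hu hb hw; lra.
  apply/andP; split; first by apply: lt0r_neq0; clear -ha hu hb hw; lra.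
  apply/andP; split; first by apply: lt0r_neq0; clear -ha hu hb hw; lra.
  apply/andP; split; first by apply: lt0r_neq0; clear -ha hu hb hw; lra.
  apply/andP; split; first by apply: lt0r_neq0; clear -ha hu hb hw; lra.
  apply/andP; split; first by apply: lt0r_neq0; clear -ha hu hb hw; lra.
  apply/andP; split; first by apply: lt0r_neq0; clear -ha hu hb hw; lra.
  apply/andP; split; first by apply: lt0r_neq0; clear -ha hu hb hw; lra.
  apply/andP; split; first by apply: lt0r_neq0; clear -ha hu hb hw; lra.
  apply/andP; split; first by apply: lt0r_neq0; clear -ha hu hb hw; lra.
  apply/andP; split; first by apply: lt0r_neq0; clear -ha hu hb hw; lra.
  apply/andP; split; first by apply: lt0r_neq0; clear -ha hu hb hw; lra.
  apply/andP; split; first by apply: lt0r_neq0; clear -ha hu hb hw; lra.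
  apply/andP; split; first by apply: lt0r_neq0; clear -ha hu hb hw; lra.
  apply/andP; split; first by apply: lt0r_neq0; clear -ha hu hb hw; lra.
  apply/andP; split; first by apply: lt0r_neq0; clear -ha hu hb hw; lra.
  apply/andP; split; first by apply: lt0r_neq0; clear -ha hu hb hw; lra.
  apply/andP; split; first by apply: lt0r_neq0; clear -ha hu hb hw; lra.
  apply/andP; split; first by apply: lt0r_neq0; clear -ha hu hb hw; lra.
  apply/andP; split; first by apply: lt0r_neq0; clear -ha hu hb hw; lra.
  apply/andP; split; first by apply: lt0r_neq0; clear -ha hu hb hw; lra.
  apply/andP; split; first by apply: lt0r_neq0; clear -ha hu hb hw; lra.
  by [].
- exfalso; lra.
- apply: (@leq_trans (size [:: (0,3,2)%N; (2,0,3)%N; (3,2,0)%N; (0,5,1)%N; (1,0,5)%N; (5,1,0)%N; (0,0,7)%N; (0,7,0)%N; (7,0,0)%N; (1,1,1)%N; (1,3,0)%N; (3,0,1)%N; (2,2,2)%N; (1,2,4)%N; (2,4,1)%N; (4,1,2)%N; (0,2,6)%N; (1,4,3)%N; (3,1,4)%N; (0,4,5)%N; (2,1,6)%N; (3,3,3)%N; (0,6,4)%N; (1,1,8)%N; (2,3,5)%N; (5,2,3)%N; (0,1,10)%N; (0,8,3)%N; (1,3,7)%N; (2,5,4)%N; (4,2,5)%N])); first by [].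
  apply: (@count_lb _ _ Linv [:: (0,3,2)%N; (2,0,3)%N; (3,2,0)%N; (0,5,1)%N; (1,0,5)%N; (5,1,0)%N; (0,0,7)%N; (0,7,0)%N; (7,0,0)%N; (1,1,1)%N; (1,3,0)%N; (3,0,1)%N; (2,2,2)%N; (1,2,4)%N; (2,4,1)%N; (4,1,2)%N; (0,2,6)%N; (1,4,3)%N; (3,1,4)%N; (0,4,5)%N; (2,1,6)%N; (3,3,3)%N; (0,6,4)%N; (1,1,8)%N; (2,3,5)%N; (5,2,3)%N; (0,1,10)%N; (0,8,3)%N; (1,3,7)%N; (2,5,4)%N; (4,2,5)%N] [:: (0,1,3)%N; (2,6,0)%N; (4,3,1)%N; (6,0,2)%N; (1,6,2)%N; (4,5,0)%N; (5,0,4)%N; (6,2,1)%N; (1,8,1)%N; (3,5,2)%N; (4,0,6)%N; (6,4,0)%N; (8,1,1)%N; (1,10,0)%N; (3,0,8)%N; (3,7,1)%N; (5,4,2)%N; (7,1,3)%N; (8,3,0)%N; (10,0,1)%N]); first by vm_compute.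
  rewrite /=.
  apply/andP; split; first by rewrite ?oner_eq0 ?pnatr_eq0.
  apply/andP; split; first by rewrite ?oner_eq0 ?pnatr_eq0.
  apply/andP; split; first by rewrite ?oner_eq0 ?pnatr_eq0.
  apply/andP; split; first by rewrite ?oner_eq0 ?pnatr_eq0.
  apply/andP; split; first by rewrite ?oner_eq0 ?pnatr_eq0.
  apply/andP; split; first by rewrite ?oner_eq0 ?pnatr_eq0.
  apply/andP; split; first by rewrite ?oner_eq0 ?pnatr_eq0.
  apply/andP; split; first by rewrite ?oner_eq0 ?pnatr_eq0.
  apply/andP; split; first by rewrite ?oner_eq0 ?pnatr_eq0.
  apply/andP; split; first by apply: lt0r_neq0; clear -ha hu hb hw; lra.
  apply/andP; split; first by apply: lt0r_neq0; clear -ha hu hb hw; lra.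
  apply/andP; split; first by apply: lt0r_neq0; clear -ha hu hb hw; lra.
  apply/andP; split; first by apply: lt0r_neq0; clear -ha hu hb hw; lra.
  apply/andP; split; first by apply: lt0r_neq0; clear -ha hu hb hw; lra.
  apply/andP; split; first by apply: lt0r_neq0; clear -ha hu hb hw; lra.
  apply/andP; split; first by apply: lt0r_neq0; clear -ha hu hb hw; lra.
  apply/andP; split; first by apply: lt0r_neq0; clear -ha hu hb hw; lra.
  apply/andP; split; first by apply: lt0r_neq0; clear -ha hu hb hw; lra.
  apply/andP; split; first by apply: lt0r_neq0; clear -ha hu hb hw; lra.
  apply/andP; split; first by apply: lt0r_neq0; clear -ha hu hb hw; lra.
  apply/andP; split; first by apply: lt0r_neq0; clear -ha hu hb hw; lra.
  apply/andP; split; first by apply: lt0r_neq0; clear -ha hu hb hw; lra.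
  apply/andP; split; first by apply: lt0r_neq0; clear -ha hu hb hw; lra.
  apply/andP; split; first by apply: lt0r_neq0; clear -ha hu hb hw; lra.
  apply/andP; split; first by apply: lt0r_neq0; clear -ha hu hb hw; lra.
  apply/andP; split; first by apply: lt0r_neq0; clear -ha hu hb hw; lra.
  apply/andP; split; first by apply: lt0r_neq0; clear -ha hu hb hw; lra.
  apply/andP; split; first by apply: lt0r_neq0; clear -ha hu hb hw; lra.
  apply/andP; split; first by apply: lt0r_neq0; clear -ha hu hb hw; lra.
  apply/andP; split; first by apply: lt0r_neq0; clear -ha hu hb hw; lra.
  apply/andP; split; first by apply: lt0r_neq0; clear -ha hu hb hw; lra.
  by [].
- exfalso; lra.
- apply: (@leq_trans (size [:: (0,3,2)%N; (2,0,3)%N; (3,2,0)%N; (0,5,1)%N; (1,0,5)%N; (5,1,0)%N; (0,0,7)%N; (0,7,0)%N; (7,0,0)%N; (1,1,1)%N; (3,0,1)%N; (2,2,2)%N; (1,2,4)%N; (2,4,1)%N; (4,1,2)%N; (0,2,6)%N; (1,4,3)%N; (2,6,0)%N; (3,1,4)%N; (4,3,1)%N; (0,4,5)%N; (1,6,2)%N; (2,1,6)%N; (3,3,3)%N; (4,5,0)%N; (0,6,4)%N; (1,1,8)%N; (1,8,1)%N; (2,3,5)%N; (3,5,2)%N; (5,2,3)%N])); first by [].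
  apply: (@count_lb _ _ Linv [:: (0,3,2)%N; (2,0,3)%N; (3,2,0)%N; (0,5,1)%N; (1,0,5)%N; (5,1,0)%N; (0,0,7)%N; (0,7,0)%N; (7,0,0)%N; (1,1,1)%N; (3,0,1)%N; (2,2,2)%N; (1,2,4)%N; (2,4,1)%N; (4,1,2)%N; (0,2,6)%N; (1,4,3)%N; (2,6,0)%N; (3,1,4)%N; (4,3,1)%N; (0,4,5)%N; (1,6,2)%N; (2,1,6)%N; (3,3,3)%N; (4,5,0)%N; (0,6,4)%N; (1,1,8)%N; (1,8,1)%N; (2,3,5)%N; (3,5,2)%N; (5,2,3)%N] [:: (0,1,3)%N; (1,3,0)%N; (6,0,2)%N; (5,0,4)%N; (6,2,1)%N; (4,0,6)%N; (6,4,0)%N; (8,1,1)%N; (0,1,10)%N; (0,8,3)%N; (1,3,7)%N; (1,10,0)%N; (2,5,4)%N; (3,0,8)%N; (3,7,1)%N; (4,2,5)%N; (5,4,2)%N; (7,1,3)%N; (8,3,0)%N; (10,0,1)%N]); first by vm_compute.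
  rewrite /=.
  apply/andP; split; first by rewrite ?oner_eq0 ?pnatr_eq0.
  apply/andP; split; first by rewrite ?oner_eq0 ?pnatr_eq0.
  apply/andP; split; first by rewrite ?oner_eq0 ?pnatr_eq0.
  apply/andP; split; first by rewrite ?oner_eq0 ?pnatr_eq0.
  apply/andP; split; first by rewrite ?oner_eq0 ?pnatr_eq0.
  apply/andP; split; first by rewrite ?oner_eq0 ?pnatr_eq0.
  apply/andP; split; first by rewrite ?oner_eq0 ?pnatr_eq0.
  apply/andP; split; first by rewrite ?oner_eq0 ?pnatr_eq0.
  apply/andP; split; first by rewrite ?oner_eq0 ?pnatr_eq0.
  apply/andP; split; first by apply: lt0r_neq0; clear -ha hu hb hw; lra.
  apply/andP; split; first by apply: lt0r_neq0; clear -ha hu hb hw; lra.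
  apply/andP; split; first by apply: lt0r_neq0; clear -ha hu hb hw; lra.
  apply/andP; split; first by apply: lt0r_neq0; clear -ha hu hb hw; lra.
  apply/andP; split; first by apply: lt0r_neq0; clear -ha hu hb hw; lra.
  apply/andP; split; first by apply: lt0r_neq0; clear -ha hu hb hw; lra.
  apply/andP; split; first by apply: lt0r_neq0; clear -ha hu hb hw; lra.
  apply/andP; split; first by apply: lt0r_neq0; clear -ha hu hb hw; lra.
  apply/andP; split; first by apply: lt0r_neq0; clear -ha hu hb hw; lra.
  apply/andP; split; first by apply: lt0r_neq0; clear -ha hu hb hw; lra.
  apply/andP; split; first by apply: lt0r_neq0; clear -ha hu hb hw; lra.
  apply/andP; split; first by apply: lt0r_neq0; clear -ha hu hb hw; lra.
  apply/andP; split; first by apply: lt0r_neq0; clear -ha hu hb hw; lra.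
  apply/andP; split; first by apply: lt0r_neq0; clear -ha hu hb hw; lra.
  apply/andP; split; first by apply: lt0r_neq0; clear -ha hu hb hw; lra.
  apply/andP; split; first by apply: lt0r_neq0; clear -ha hu hb hw; lra.
  apply/andP; split; first by apply: lt0r_neq0; clear -ha hu hb hw; lra.
  apply/andP; split; first by apply: lt0r_neq0; clear -ha hu hb hw; lra.
  apply/andP; split; first by apply: lt0r_neq0; clear -ha hu hb hw; lra.
  apply/andP; split; first by apply: lt0r_neq0; clear -ha hu hb hw; lra.
  apply/andP; split; first by apply: lt0r_neq0; clear -ha hu hb hw; lra.
  apply/andP; split; first by apply: lt0r_neq0; clear -ha hu hb hw; lra.
  by [].
- exfalso; lra.
- by move: hl; rewrite /= ?hu ?hb ?hw ?mulr0 ?addr0 ?add0r ?eqxx.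
- apply: (@leq_trans (size [:: (0,3,2)%N; (2,0,3)%N; (3,2,0)%N; (0,5,1)%N; (1,0,5)%N; (5,1,0)%N; (0,0,7)%N; (0,7,0)%N; (7,0,0)%N; (0,1,3)%N; (1,3,0)%N; (2,2,2)%N; (1,2,4)%N; (2,4,1)%N; (4,1,2)%N; (3,1,4)%N; (4,3,1)%N; (6,0,2)%N; (3,3,3)%N; (5,0,4)%N; (6,2,1)%N; (3,5,2)%N; (4,0,6)%N; (5,2,3)%N; (8,1,1)%N; (3,0,8)%N; (3,7,1)%N; (4,2,5)%N; (5,4,2)%N; (7,1,3)%N; (10,0,1)%N])); first by [].
  apply: (@count_lb _ _ Linv [:: (0,3,2)%N; (2,0,3)%N; (3,2,0)%N; (0,5,1)%N; (1,0,5)%N; (5,1,0)%N; (0,0,7)%N; (0,7,0)%N; (7,0,0)%N; (0,1,3)%N; (1,3,0)%N; (2,2,2)%N; (1,2,4)%N; (2,4,1)%N; (4,1,2)%N; (3,1,4)%N; (4,3,1)%N; (6,0,2)%N; (3,3,3)%N; (5,0,4)%N; (6,2,1)%N; (3,5,2)%N; (4,0,6)%N; (5,2,3)%N; (8,1,1)%N; (3,0,8)%N; (3,7,1)%N; (4,2,5)%N; (5,4,2)%N; (7,1,3)%N; (10,0,1)%N] [:: (1,1,1)%N; (3,0,1)%N; (0,2,6)%N; (1,4,3)%N; (2,6,0)%N; (0,4,5)%N; (1,6,2)%N; (2,1,6)%N; (4,5,0)%N; (0,6,4)%N; (1,1,8)%N; (1,8,1)%N; (2,3,5)%N; (6,4,0)%N;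 (0,1,10)%N; (0,8,3)%N; (1,3,7)%N; (1,10,0)%N; (2,5,4)%N; (8,3,0)%N]); first by vm_compute.
  rewrite /=.
  apply/andP; split; first by rewrite ?oner_eq0 ?pnatr_eq0.
  apply/andP; split; first by rewrite ?oner_eq0 ?pnatr_eq0.
  apply/andP; split; first by rewrite ?oner_eq0 ?pnatr_eq0.
  apply/andP; split; first by rewrite ?oner_eq0 ?pnatr_eq0.
  apply/andP; split; first by rewrite ?oner_eq0 ?pnatr_eq0.
  apply/andP; split; first by rewrite ?oner_eq0 ?pnatr_eq0.
  apply/andP; split; first by rewrite ?oner_eq0 ?pnatr_eq0.
  apply/andP; split; first by rewrite ?oner_eq0 ?pnatr_eq0.
  apply/andP; split; first by rewrite ?oner_eq0 ?pnatr_eq0.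
  apply/andP; split; first by apply: lt0r_neq0; clear -ha hu hb hw; lra.
  apply/andP; split; first by apply: lt0r_neq0; clear -ha hu hb hw; lra.
  apply/andP; split; first by apply: lt0r_neq0; clear -ha hu hb hw f_1_4_3; lra.
  apply/andP; split; first by apply: lt0r_neq0; clear -ha hu hb hw f_2_2_2; lra.
  apply/andP; split; first by apply: lt0r_neq0; clear -ha hu hb hw f_2_2_2; lra.
  apply/andP; split; first by apply: lt0r_neq0; clear -ha hu hb hw f_2_2_2; lra.
  apply/andP; split; first by apply: lt0r_neq0; clear -ha hu hb hw f_1_4_3; lra.
  apply/andP; split; first by apply: lt0r_neq0; clear -ha hu hb hw f_1_4_3; lra.
  apply/andP; split; first by apply: lt0r_neq0; clear -ha hu hb hw; lra.
  apply/andP; split; first by apply: lt0r_neq0; clear -ha hu hb hw f_1_4_3; lra.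
  apply/andP; split; first by apply: lt0r_neq0; clear -ha hu hb hw; lra.
  apply/andP; split; first by apply: lt0r_neq0; clear -ha hu hb hw f_1_4_3; lra.
  apply/andP; split; first by apply: lt0r_neq0; clear -ha hu hb hw f_1_4_3; lra.
  apply/andP; split; first by apply: lt0r_neq0; clear -ha hu hb hw; lra.
  apply/andP; split; first by apply: lt0r_neq0; clear -ha hu hb hw f_1_4_3; lra.
  apply/andP; split; first by apply: lt0r_neq0; clear -ha hu hb hw; lra.
  apply/andP; split; first by apply: lt0r_neq0; clear -ha hu hb hw; lra.
  apply/andP; split; first by apply: lt0r_neq0; clear -ha hu hb hw; lra.
  apply/andP; split; first by apply: lt0r_neq0; clear -ha hu hb hw; lra.
  apply/andP; split; first by apply: lt0r_neq0; clear -ha hu hb hw; lra.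
  apply/andP; split; first by apply: lt0r_neq0; clear -ha hu hb hw; lra.
  apply/andP; split; first by apply: lt0r_neq0; clear -ha hu hb hw; lra.
  by [].
- apply: (@leq_trans (size [:: (0,3,2)%N; (2,0,3)%N; (3,2,0)%N; (0,5,1)%N; (1,0,5)%N; (5,1,0)%N; (0,0,7)%N; (0,7,0)%N; (7,0,0)%N; (0,1,3)%N; (3,0,1)%N; (2,2,2)%N; (1,2,4)%N; (2,4,1)%N; (4,1,2)%N; (1,4,3)%N; (2,6,0)%N; (3,1,4)%N; (4,3,1)%N; (1,6,2)%N; (2,1,6)%N; (3,3,3)%N; (4,5,0)%N; (6,2,1)%N; (1,1,8)%N; (1,8,1)%N; (2,3,5)%N; (3,5,2)%N; (5,2,3)%N; (6,4,0)%N; (8,1,1)%N])); first by [].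
  apply: (@count_lb _ _ Linv [:: (0,3,2)%N; (2,0,3)%N; (3,2,0)%N; (0,5,1)%N; (1,0,5)%N; (5,1,0)%N; (0,0,7)%N; (0,7,0)%N; (7,0,0)%N; (0,1,3)%N; (3,0,1)%N; (2,2,2)%N; (1,2,4)%N; (2,4,1)%N; (4,1,2)%N; (1,4,3)%N; (2,6,0)%N; (3,1,4)%N; (4,3,1)%N; (1,6,2)%N; (2,1,6)%N; (3,3,3)%N; (4,5,0)%N; (6,2,1)%N; (1,1,8)%N; (1,8,1)%N; (2,3,5)%N; (3,5,2)%N; (5,2,3)%N; (6,4,0)%N; (8,1,1)%N] [:: (1,1,1)%N; (1,3,0)%N; (0,2,6)%N; (6,0,2)%N; (0,4,5)%N; (5,0,4)%N; (0,6,4)%N; (4,0,6)%N; (0,1,10)%N; (0,8,3)%N; (1,3,7)%N; (1,10,0)%N; (2,5,4)%N; (3,0,8)%N; (3,7,1)%N; (4,2,5)%N; (5,4,2)%N; (7,1,3)%N; (8,3,0)%N; (10,0,1)%N]); first by vm_compute.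
  rewrite /=.
  apply/andP; split; first by rewrite ?oner_eq0 ?pnatr_eq0.
  apply/andP; split; first by rewrite ?oner_eq0 ?pnatr_eq0.
  apply/andP; split; first by rewrite ?oner_eq0 ?pnatr_eq0.
  apply/andP; split; first by rewrite ?oner_eq0 ?pnatr_eq0.
  apply/andP; split; first by rewrite ?oner_eq0 ?pnatr_eq0.
  apply/andP; split; first by rewrite ?oner_eq0 ?pnatr_eq0.
  apply/andP; split; first by rewrite ?oner_eq0 ?pnatr_eq0.
  apply/andP; split; first by rewrite ?oner_eq0 ?pnatr_eq0.
  apply/andP; split; first by rewrite ?oner_eq0 ?pnatr_eq0.
  apply/andP; split; first by apply: lt0r_neq0; clear -ha hu hb hw; lra.
  apply/andP; split; first by apply: lt0r_neq0; clear -ha hu hb hw; lra.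
  apply/andP; split; first by apply: lt0r_neq0; clear -ha hu hb hw; lra.
  apply/andP; split; first by apply: lt0r_neq0; clear -ha hu hb hw; lra.
  apply/andP; split; first by apply: lt0r_neq0; clear -ha hu hb hw; lra.
  apply/andP; split; first by apply: lt0r_neq0; clear -ha hu hb hw; lra.
  apply/andP; split; first by apply: lt0r_neq0; clear -ha hu hb hw; lra.
  apply/andP; split; first by apply: lt0r_neq0; clear -ha hu hb hw; lra.
  apply/andP; split; first by apply: lt0r_neq0; clear -ha hu hb hw; lra.
  apply/andP; split; first by apply: lt0r_neq0; clear -ha hu hb hw; lra.
  apply/andP; split; first by apply: lt0r_neq0; clear -ha hu hb hw; lra.
  apply/andP; split; first by apply: lt0r_neq0; clear -ha hu hb hw; lra.
  apply/andP; split; first by apply: lt0r_neq0; clear -ha hu hb hw; lra.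
  apply/andP; split; first by apply: lt0r_neq0; clear -ha hu hb hw; lra.
  apply/andP; split; first by apply: lt0r_neq0; clear -ha hu hb hw; lra.
  apply/andP; split; first by apply: lt0r_neq0; clear -ha hu hb hw; lra.
  apply/andP; split; first by apply: lt0r_neq0; clear -ha hu hb hw; lra.
  apply/andP; split; first by apply: lt0r_neq0; clear -ha hu hb hw; lra.
  apply/andP; split; first by apply: lt0r_neq0; clear -ha hu hb hw; lra.
  apply/andP; split; first by apply: lt0r_neq0; clear -ha hu hb hw; lra.
  apply/andP; split; first by apply: lt0r_neq0; clear -ha hu hb hw; lra.
  apply/andP; split; first by apply: lt0r_neq0; clear -ha hu hb hw; lra.
  by [].
- apply: (@leq_trans (size [:: (0,3,2)%N; (2,0,3)%N; (3,2,0)%N; (0,5,1)%N; (1,0,5)%N; (5,1,0)%N; (0,0,7)%N; (0,7,0)%N; (7,0,0)%N; (0,1,3)%N; (2,2,2)%N; (1,2,4)%N; (2,4,1)%N; (4,1,2)%N; (1,4,3)%N; (2,6,0)%N; (3,1,4)%N; (4,3,1)%N; (6,0,2)%N; (1,6,2)%N; (3,3,3)%N; (4,5,0)%N; (5,0,4)%N; (6,2,1)%N; (1,8,1)%N; (2,3,5)%N; (3,5,2)%N; (4,0,6)%N; (5,2,3)%N; (6,4,0)%N; (8,1,1)%N])); first by [].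
  apply: (@count_lb _ _ Linv [:: (0,3,2)%N; (2,0,3)%N; (3,2,0)%N; (0,5,1)%N; (1,0,5)%N; (5,1,0)%N; (0,0,7)%N; (0,7,0)%N; (7,0,0)%N; (0,1,3)%N; (2,2,2)%N; (1,2,4)%N; (2,4,1)%N; (4,1,2)%N; (1,4,3)%N; (2,6,0)%N; (3,1,4)%N; (4,3,1)%N; (6,0,2)%N; (1,6,2)%N; (3,3,3)%N; (4,5,0)%N; (5,0,4)%N; (6,2,1)%N; (1,8,1)%N; (2,3,5)%N; (3,5,2)%N; (4,0,6)%N; (5,2,3)%N; (6,4,0)%N; (8,1,1)%N] [:: (1,1,1)%N; (1,3,0)%N; (3,0,1)%N; (0,2,6)%N; (0,4,5)%N; (2,1,6)%N; (0,6,4)%N; (1,1,8)%N; (0,1,10)%N; (0,8,3)%N; (1,3,7)%N; (1,10,0)%N; (2,5,4)%N; (3,0,8)%N; (3,7,1)%N; (4,2,5)%N; (5,4,2)%N; (7,1,3)%N; (8,3,0)%N; (10,0,1)%N]); first by vm_compute.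
  rewrite /=.
  apply/andP; split; first by rewrite ?oner_eq0 ?pnatr_eq0.
  apply/andP; split; first by rewrite ?oner_eq0 ?pnatr_eq0.
  apply/andP; split; first by rewrite ?oner_eq0 ?pnatr_eq0.
  apply/andP; split; first by rewrite ?oner_eq0 ?pnatr_eq0.
  apply/andP; split; first by rewrite ?oner_eq0 ?pnatr_eq0.
  apply/andP; split; first by rewrite ?oner_eq0 ?pnatr_eq0.
  apply/andP; split; first by rewrite ?oner_eq0 ?pnatr_eq0.
  apply/andP; split; first by rewrite ?oner_eq0 ?pnatr_eq0.
  apply/andP; split; first by rewrite ?oner_eq0 ?pnatr_eq0.
  apply/andP; split; first by apply: lt0r_neq0; clear -ha hu hb hw; lra.
  apply/andP; split; first by apply: lt0r_neq0; clear -ha hu hb hw f_2_1_6; lra.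
  apply/andP; split; first by apply: lt0r_neq0; clear -ha hu hb hw f_2_2_2; lra.
  apply/andP; split; first by apply: lt0r_neq0; clear -ha hu hb hw f_2_2_2; lra.
  apply/andP; split; first by apply: lt0r_neq0; clear -ha hu hb hw f_2_2_2; lra.
  apply/andP; split; first by apply: lt0r_neq0; clear -ha hu hb hw f_2_1_6; lra.
  apply/andP; split; first by apply: lt0r_neq0; clear -ha hu hb hw; lra.
  apply/andP; split; first by apply: lt0r_neq0; clear -ha hu hb hw f_2_1_6; lra.
  apply/andP; split; first by apply: lt0r_neq0; clear -ha hu hb hw f_1_4_3; lra.
  apply/andP; split; first by apply: lt0r_neq0; clear -ha hu hb hw; lra.
  apply/andP; split; first by apply: lt0r_neq0; clear -ha hu hb hw f_1_4_3; lra.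
  apply/andP; split; first by apply: lt0r_neq0; clear -ha hu hb hw f_1_4_3; lra.
  apply/andP; split; first by apply: lt0r_neq0; clear -ha hu hb hw; lra.
  apply/andP; split; first by apply: lt0r_neq0; clear -ha hu hb hw; lra.
  apply/andP; split; first by apply: lt0r_neq0; clear -ha hu hb hw f_3_1_4; lra.
  apply/andP; split; first by apply: lt0r_neq0; clear -ha hu hb hw f_1_4_3; lra.
  apply/andP; split; first by apply: lt0r_neq0; clear -ha hu hb hw f_1_4_3; lra.
  apply/andP; split; first by apply: lt0r_neq0; clear -ha hu hb hw f_1_4_3; lra.
  apply/andP; split; first by apply: lt0r_neq0; clear -ha hu hb hw; lra.
  apply/andP; split; first by apply: lt0r_neq0; clear -ha hu hb hw f_3_1_4; lra.
  apply/andP; split; first by apply: lt0r_neq0; clear -ha hu hb hw; lra.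
  apply/andP; split; first by apply: lt0r_neq0; clear -ha hu hb hw; lra.
  by [].
- apply: (@leq_trans (size [:: (0,3,2)%N; (2,0,3)%N; (3,2,0)%N; (0,5,1)%N; (1,0,5)%N; (5,1,0)%N; (0,0,7)%N; (0,7,0)%N; (7,0,0)%N; (1,3,0)%N; (3,0,1)%N; (2,2,2)%N; (1,2,4)%N; (2,4,1)%N; (4,1,2)%N; (0,2,6)%N; (1,4,3)%N; (3,1,4)%N; (4,3,1)%N; (0,4,5)%N; (1,6,2)%N; (2,1,6)%N; (3,3,3)%N; (6,2,1)%N; (0,6,4)%N; (1,1,8)%N; (1,8,1)%N; (2,3,5)%N; (3,5,2)%N; (5,2,3)%N; (8,1,1)%N])); first by [].
  apply: (@count_lb _ _ Linv [:: (0,3,2)%N; (2,0,3)%N; (3,2,0)%N; (0,5,1)%N; (1,0,5)%N; (5,1,0)%N; (0,0,7)%N; (0,7,0)%N; (7,0,0)%N; (1,3,0)%N; (3,0,1)%N; (2,2,2)%N; (1,2,4)%N; (2,4,1)%N; (4,1,2)%N; (0,2,6)%N; (1,4,3)%N; (3,1,4)%N; (4,3,1)%N; (0,4,5)%N; (1,6,2)%N; (2,1,6)%N; (3,3,3)%N; (6,2,1)%N; (0,6,4)%N; (1,1,8)%N; (1,8,1)%N; (2,3,5)%N; (3,5,2)%N; (5,2,3)%N; (8,1,1)%N] [:: (1,1,1)%N; (0,1,3)%N; (2,6,0)%N; (6,0,2)%N; (4,5,0)%N; (5,0,4)%N; (4,0,6)%N; (6,4,0)%N; (0,1,10)%N;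 (0,8,3)%N; (1,3,7)%N; (1,10,0)%N; (2,5,4)%N; (3,0,8)%N; (3,7,1)%N; (4,2,5)%N; (5,4,2)%N; (7,1,3)%N; (8,3,0)%N; (10,0,1)%N]); first by vm_compute.
  rewrite /=.
  apply/andP; split; first by rewrite ?oner_eq0 ?pnatr_eq0.
  apply/andP; split; first by rewrite ?oner_eq0 ?pnatr_eq0.
  apply/andP; split; first by rewrite ?oner_eq0 ?pnatr_eq0.
  apply/andP; split; first by rewrite ?oner_eq0 ?pnatr_eq0.
  apply/andP; split; first by rewrite ?oner_eq0 ?pnatr_eq0.
  apply/andP; split; first by rewrite ?oner_eq0 ?pnatr_eq0.
  apply/andP; split; first by rewrite ?oner_eq0 ?pnatr_eq0.
  apply/andP; split; first by rewrite ?oner_eq0 ?pnatr_eq0.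
  apply/andP; split; first by rewrite ?oner_eq0 ?pnatr_eq0.
  apply/andP; split; first by apply: lt0r_neq0; clear -ha hu hb hw; lra.
  apply/andP; split; first by apply: lt0r_neq0; clear -ha hu hb hw; lra.
  apply/andP; split; first by apply: lt0r_neq0; clear -ha hu hb hw; lra.
  apply/andP; split; first by apply: lt0r_neq0; clear -ha hu hb hw; lra.
  apply/andP; split; first by apply: lt0r_neq0; clear -ha hu hb hw; lra.
  apply/andP; split; first by apply: lt0r_neq0; clear -ha hu hb hw; lra.
  apply/andP; split; first by apply: lt0r_neq0; clear -ha hu hb hw; lra.
  apply/andP; split; first by apply: lt0r_neq0; clear -ha hu hb hw; lra.
  apply/andP; split; first by apply: lt0r_neq0; clear -ha hu hb hw; lra.
  apply/andP; split; first by apply: lt0r_neq0; clear -ha hu hb hw; lra.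
  apply/andP; split; first by apply: lt0r_neq0; clear -ha hu hb hw; lra.
  apply/andP; split; first by apply: lt0r_neq0; clear -ha hu hb hw; lra.
  apply/andP; split; first by apply: lt0r_neq0; clear -ha hu hb hw; lra.
  apply/andP; split; first by apply: lt0r_neq0; clear -ha hu hb hw; lra.
  apply/andP; split; first by apply: lt0r_neq0; clear -ha hu hb hw; lra.
  apply/andP; split; first by apply: lt0r_neq0; clear -ha hu hb hw; lra.
  apply/andP; split; first by apply: lt0r_neq0; clear -ha hu hb hw; lra.
  apply/andP; split; first by apply: lt0r_neq0; clear -ha hu hb hw; lra.
  apply/andP; split; first by apply: lt0r_neq0; clear -ha hu hb hw; lra.
  apply/andP; split; first by apply: lt0r_neq0; clear -ha hu hb hw; lra.
  apply/andP; split; first by apply: lt0r_neq0; clear -ha hu hb hw; lra.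
  apply/andP; split; first by apply: lt0r_neq0; clear -ha hu hb hw; lra.
  by [].
- apply: (@leq_trans (size [:: (0,3,2)%N; (2,0,3)%N; (3,2,0)%N; (0,5,1)%N; (1,0,5)%N; (5,1,0)%N; (0,0,7)%N; (0,7,0)%N; (7,0,0)%N; (1,3,0)%N; (2,2,2)%N; (1,2,4)%N; (2,4,1)%N; (4,1,2)%N; (0,2,6)%N; (1,4,3)%N; (3,1,4)%N; (4,3,1)%N; (6,0,2)%N; (0,4,5)%N; (2,1,6)%N; (3,3,3)%N; (5,0,4)%N; (6,2,1)%N; (0,6,4)%N; (1,1,8)%N; (2,3,5)%N; (3,5,2)%N; (4,0,6)%N; (5,2,3)%N; (8,1,1)%N])); first by [].
  apply: (@count_lb _ _ Linv [:: (0,3,2)%N; (2,0,3)%N; (3,2,0)%N; (0,5,1)%N; (1,0,5)%N; (5,1,0)%N; (0,0,7)%N; (0,7,0)%N; (7,0,0)%N; (1,3,0)%N; (2,2,2)%N; (1,2,4)%N; (2,4,1)%N; (4,1,2)%N; (0,2,6)%N; (1,4,3)%N; (3,1,4)%N; (4,3,1)%N; (6,0,2)%N; (0,4,5)%N; (2,1,6)%N; (3,3,3)%N; (5,0,4)%N; (6,2,1)%N; (0,6,4)%N; (1,1,8)%N; (2,3,5)%N; (3,5,2)%N; (4,0,6)%N; (5,2,3)%N; (8,1,1)%N] [:: (1,1,1)%N; (0,1,3)%N; (3,0,1)%N; (2,6,0)%N; (1,6,2)%N; (4,5,0)%N; (1,8,1)%N; (6,4,0)%N; (0,1,10)%N;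 (0,8,3)%N; (1,3,7)%N; (1,10,0)%N; (2,5,4)%N; (3,0,8)%N; (3,7,1)%N; (4,2,5)%N; (5,4,2)%N; (7,1,3)%N; (8,3,0)%N; (10,0,1)%N]); first by vm_compute.
  rewrite /=.
  apply/andP; split; first by rewrite ?oner_eq0 ?pnatr_eq0.
  apply/andP; split; first by rewrite ?oner_eq0 ?pnatr_eq0.
  apply/andP; split; first by rewrite ?oner_eq0 ?pnatr_eq0.
  apply/andP; split; first by rewrite ?oner_eq0 ?pnatr_eq0.
  apply/andP; split; first by rewrite ?oner_eq0 ?pnatr_eq0.
  apply/andP; split; first by rewrite ?oner_eq0 ?pnatr_eq0.
  apply/andP; split; first by rewrite ?oner_eq0 ?pnatr_eq0.
  apply/andP; split; first by rewrite ?oner_eq0 ?pnatr_eq0.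
  apply/andP; split; first by rewrite ?oner_eq0 ?pnatr_eq0.
  apply/andP; split; first by apply: lt0r_neq0; clear -ha hu hb hw; lra.
  apply/andP; split; first by apply: lt0r_neq0; clear -ha hu hb hw f_1_6_2; lra.
  apply/andP; split; first by apply: lt0r_neq0; clear -ha hu hb hw f_2_2_2; lra.
  apply/andP; split; first by apply: lt0r_neq0; clear -ha hu hb hw f_2_2_2; lra.
  apply/andP; split; first by apply: lt0r_neq0; clear -ha hu hb hw f_2_2_2; lra.
  apply/andP; split; first by apply: lt0r_neq0; clear -ha hu hb hw; lra.
  apply/andP; split; first by apply: lt0r_neq0; clear -ha hu hb hw f_1_6_2; lra.
  apply/andP; split; first by apply: lt0r_neq0; clear -ha hu hb hw f_1_4_3; lra.
  apply/andP; split; first by apply: lt0r_neq0; clear -ha hu hb hw f_1_6_2; lra.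
  apply/andP; split; first by apply: lt0r_neq0; clear -ha hu hb hw; lra.
  apply/andP; split; first by apply: lt0r_neq0; clear -ha hu hb hw; lra.
  apply/andP; split; first by apply: lt0r_neq0; clear -ha hu hb hw f_1_4_3; lra.
  apply/andP; split; first by apply: lt0r_neq0; clear -ha hu hb hw f_1_4_3; lra.
  apply/andP; split; first by apply: lt0r_neq0; clear -ha hu hb hw; lra.
  apply/andP; split; first by apply: lt0r_neq0; clear -ha hu hb hw f_4_3_1; lra.
  apply/andP; split; first by apply: lt0r_neq0; clear -ha hu hb hw; lra.
  apply/andP; split; first by apply: lt0r_neq0; clear -ha hu hb hw f_1_4_3; lra.
  apply/andP; split; first by apply: lt0r_neq0; clear -ha hu hb hw f_1_4_3; lra.
  apply/andP; split; first by apply: lt0r_neq0; clear -ha hu hb hw f_4_3_1; lra.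
  apply/andP; split; first by apply: lt0r_neq0; clear -ha hu hb hw; lra.
  apply/andP; split; first by apply: lt0r_neq0; clear -ha hu hb hw f_1_4_3; lra.
  apply/andP; split; first by apply: lt0r_neq0; clear -ha hu hb hw; lra.
  by [].
- apply: (@leq_trans (size [:: (0,3,2)%N; (2,0,3)%N; (3,2,0)%N; (0,5,1)%N; (1,0,5)%N; (5,1,0)%N; (0,0,7)%N; (0,7,0)%N; (7,0,0)%N; (3,0,1)%N; (2,2,2)%N; (1,2,4)%N; (2,4,1)%N; (4,1,2)%N; (0,2,6)%N; (1,4,3)%N; (2,6,0)%N; (3,1,4)%N; (4,3,1)%N; (0,4,5)%N; (1,6,2)%N; (2,1,6)%N; (3,3,3)%N; (4,5,0)%N; (6,2,1)%N; (0,6,4)%N; (1,1,8)%N; (1,8,1)%N; (2,3,5)%N; (3,5,2)%N; (5,2,3)%N])); first by [].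
  apply: (@count_lb _ _ Linv [:: (0,3,2)%N; (2,0,3)%N; (3,2,0)%N; (0,5,1)%N; (1,0,5)%N; (5,1,0)%N; (0,0,7)%N; (0,7,0)%N; (7,0,0)%N; (3,0,1)%N; (2,2,2)%N; (1,2,4)%N; (2,4,1)%N; (4,1,2)%N; (0,2,6)%N; (1,4,3)%N; (2,6,0)%N; (3,1,4)%N; (4,3,1)%N; (0,4,5)%N; (1,6,2)%N; (2,1,6)%N; (3,3,3)%N; (4,5,0)%N; (6,2,1)%N; (0,6,4)%N; (1,1,8)%N; (1,8,1)%N; (2,3,5)%N; (3,5,2)%N; (5,2,3)%N] [:: (1,1,1)%N; (0,1,3)%N; (1,3,0)%N; (6,0,2)%N; (5,0,4)%N; (4,0,6)%N; (6,4,0)%N; (8,1,1)%N; (0,1,10)%N; (0,8,3)%N; (1,3,7)%N; (1,10,0)%N; (2,5,4)%N; (3,0,8)%N; (3,7,1)%N; (4,2,5)%N; (5,4,2)%N; (7,1,3)%N; (8,3,0)%N; (10,0,1)%N]); first by vm_compute.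
  rewrite /=.
  apply/andP; split; first by rewrite ?oner_eq0 ?pnatr_eq0.
  apply/andP; split; first by rewrite ?oner_eq0 ?pnatr_eq0.
  apply/andP; split; first by rewrite ?oner_eq0 ?pnatr_eq0.
  apply/andP; split; first by rewrite ?oner_eq0 ?pnatr_eq0.
  apply/andP; split; first by rewrite ?oner_eq0 ?pnatr_eq0.
  apply/andP; split; first by rewrite ?oner_eq0 ?pnatr_eq0.
  apply/andP; split; first by rewrite ?oner_eq0 ?pnatr_eq0.
  apply/andP; split; first by rewrite ?oner_eq0 ?pnatr_eq0.
  apply/andP; split; first by rewrite ?oner_eq0 ?pnatr_eq0.
  apply/andP; split; first by apply: lt0r_neq0; clear -ha hu hb hw; lra.
  apply/andP; split; first by apply: lt0r_neq0; clear -ha hu hb hw; lra.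
  apply/andP; split; first by apply: lt0r_neq0; clear -ha hu hb hw; lra.
  apply/andP; split; first by apply: lt0r_neq0; clear -ha hu hb hw; lra.
  apply/andP; split; first by apply: lt0r_neq0; clear -ha hu hb hw; lra.
  apply/andP; split; first by apply: lt0r_neq0; clear -ha hu hb hw; lra.
  apply/andP; split; first by apply: lt0r_neq0; clear -ha hu hb hw; lra.
  apply/andP; split; first by apply: lt0r_neq0; clear -ha hu hb hw; lra.
  apply/andP; split; first by apply: lt0r_neq0; clear -ha hu hb hw; lra.
  apply/andP; split; first by apply: lt0r_neq0; clear -ha hu hb hw; lra.
  apply/andP; split; first by apply: lt0r_neq0; clear -ha hu hb hw; lra.
  apply/andP; split; first by apply: lt0r_neq0; clear -ha hu hb hw; lra.
  apply/andP; split; first by apply: lt0r_neq0; clear -ha hu hb hw; lra.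
  apply/andP; split; first by apply: lt0r_neq0; clear -ha hu hb hw; lra.
  apply/andP; split; first by apply: lt0r_neq0; clear -ha hu hb hw; lra.
  apply/andP; split; first by apply: lt0r_neq0; clear -ha hu hb hw; lra.
  apply/andP; split; first by apply: lt0r_neq0; clear -ha hu hb hw; lra.
  apply/andP; split; first by apply: lt0r_neq0; clear -ha hu hb hw; lra.
  apply/andP; split; first by apply: lt0r_neq0; clear -ha hu hb hw; lra.
  apply/andP; split; first by apply: lt0r_neq0; clear -ha hu hb hw; lra.
  apply/andP; split; first by apply: lt0r_neq0; clear -ha hu hb hw; lra.
  apply/andP; split; first by apply: lt0r_neq0; clear -ha hu hb hw; lra.
  by [].
- apply: (@leq_trans (size [:: (0,3,2)%N; (2,0,3)%N; (3,2,0)%N; (0,5,1)%N; (1,0,5)%N; (5,1,0)%N; (0,0,7)%N; (0,7,0)%N; (7,0,0)%N; (1,2,4)%N; (2,4,1)%N; (4,1,2)%N; (0,2,6)%N; (2,6,0)%N; (6,0,2)%N; (0,4,5)%N; (3,3,3)%N; (4,5,0)%N; (5,0,4)%N; (0,6,4)%N; (1,1,8)%N; (1,8,1)%N; (2,3,5)%N; (3,5,2)%N; (4,0,6)%N; (5,2,3)%N; (6,4,0)%N; (8,1,1)%N; (0,1,10)%N; (0,8,3)%N; (1,3,7)%N])); first by [].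
  apply: (@count_lb _ _ Linv [:: (0,3,2)%N; (2,0,3)%N; (3,2,0)%N; (0,5,1)%N; (1,0,5)%N; (5,1,0)%N; (0,0,7)%N; (0,7,0)%N; (7,0,0)%N; (1,2,4)%N; (2,4,1)%N; (4,1,2)%N; (0,2,6)%N; (2,6,0)%N; (6,0,2)%N; (0,4,5)%N; (3,3,3)%N; (4,5,0)%N; (5,0,4)%N; (0,6,4)%N; (1,1,8)%N; (1,8,1)%N; (2,3,5)%N; (3,5,2)%N; (4,0,6)%N; (5,2,3)%N; (6,4,0)%N; (8,1,1)%N; (0,1,10)%N; (0,8,3)%N; (1,3,7)%N] [:: (1,1,1)%N; (0,1,3)%N; (1,3,0)%N; (3,0,1)%N; (2,2,2)%N; (1,4,3)%N; (3,1,4)%N; (4,3,1)%N; (1,6,2)%N; (2,1,6)%N; (6,2,1)%N; (1,10,0)%N; (2,5,4)%N; (3,0,8)%N; (3,7,1)%N; (4,2,5)%N; (5,4,2)%N; (7,1,3)%N; (8,3,0)%N; (10,0,1)%N]); first by vm_compute.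
  rewrite /=.
  apply/andP; split; first by rewrite ?oner_eq0 ?pnatr_eq0.
  apply/andP; split; first by rewrite ?oner_eq0 ?pnatr_eq0.
  apply/andP; split; first by rewrite ?oner_eq0 ?pnatr_eq0.
  apply/andP; split; first by rewrite ?oner_eq0 ?pnatr_eq0.
  apply/andP; split; first by rewrite ?oner_eq0 ?pnatr_eq0.
  apply/andP; split; first by rewrite ?oner_eq0 ?pnatr_eq0.
  apply/andP; split; first by rewrite ?oner_eq0 ?pnatr_eq0.
  apply/andP; split; first by rewrite ?oner_eq0 ?pnatr_eq0.
  apply/andP; split; first by rewrite ?oner_eq0 ?pnatr_eq0.
  apply/andP; split; first by apply: lt0r_neq0; clear -ha hu hb hw f_2_2_2; lra.
  apply/andP; split; first by apply: lt0r_neq0; clear -ha hu hb hw f_2_2_2; lra.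
  apply/andP; split; first by apply: lt0r_neq0; clear -ha hu hb hw f_2_2_2; lra.
  apply/andP; split; first by apply: lt0r_neq0; clear -ha hu hb hw; lra.
  apply/andP; split; first by apply: lt0r_neq0; clear -ha hu hb hw; lra.
  apply/andP; split; first by apply: lt0r_neq0; clear -ha hu hb hw; lra.
  apply/andP; split; first by apply: lt0r_neq0; clear -ha hu hb hw; lra.
  apply/andP; split; first by apply: lt0r_neq0; clear -ha hu hb hw f_1_4_3; lra.
  apply/andP; split; first by apply: lt0r_neq0; clear -ha hu hb hw; lra.
  apply/andP; split; first by apply: lt0r_neq0; clear -ha hu hb hw; lra.
  apply/andP; split; first by apply: lt0r_neq0; clear -ha hu hb hw; lra.
  apply/andP; split; first by apply: lt0r_neq0; clear -ha hu hb hw f_2_1_6; lra.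
  apply/andP; split; first by apply: lt0r_neq0; clear -ha hu hb hw f_1_6_2; lra.
  apply/andP; split; first by apply: lt0r_neq0; clear -ha hu hb hw f_1_4_3; lra.
  apply/andP; split; first by apply: lt0r_neq0; clear -ha hu hb hw f_4_3_1; lra.
  apply/andP; split; first by apply: lt0r_neq0; clear -ha hu hb hw; lra.
  apply/andP; split; first by apply: lt0r_neq0; clear -ha hu hb hw f_3_1_4; lra.
  apply/andP; split; first by apply: lt0r_neq0; clear -ha hu hb hw; lra.
  apply/andP; split; first by apply: lt0r_neq0; clear -ha hu hb hw; lra.
  apply/andP; split; first by apply: lt0r_neq0; clear -ha hu hb hw; lra.
  apply/andP; split; first by apply: lt0r_neq0; clear -ha hu hb hw; lra.
  apply/andP; split; first by apply: lt0r_neq0; clear -ha hu hb hw; lra.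
  by [].
Qed.


Lemma mdeg_mk3 t : mdeg (mk3 t) = deg t.
Proof. by case: t => [[a b] c]; rewrite mdeg3 !mnmE. Qed.

Lemma setup (R : rcfType) (eta : complex R) (G : {mpoly R[3]}) :
  7.-primitive_root eta -> special eta G -> (msize G <= 12)%N ->
  let A := G@_(mk3 (8,1,1)%N) in let U := G@_(mk3 (0,1,10)%N) in
  let B := G@_(mk3 (1,10,0)%N) in let W := G@_(mk3 (3,0,8)%N) in
  [/\ Nmon G = count (fun t => val t A U B W != 0) Linv,
      (forall t, t \in Linv -> 0 <= val t A U B W),
      (forall t, t \in Linv -> (msize G <= deg t)%N -> val t A U B W = 0) &
      (G != 0 -> has (fun t => (deg t == (msize G).-1)%N && (val t A U B W != 0)) Linv)].
Proof.
move=> Heta hsp hs A U B W.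
have [Hinv Hplane Hpos H0] := hsp.
pose c := fun t => G@_(mk3 t).
have hsub := Linv_sub Heta hsp hs.
have hpl : forall x y : R, \sum_(t <- Linv) c t * mono t x y (1 - x - y) = 1.
  by move=> x y; rewrite -(ev3_L _ _ _ uniq_Linv hsub); apply: Hplane; ring.
have hpar := plane_solve hpl.
have hv : forall t, t \in Linv -> c t = val t A U B W.
  by move=> t ht; apply/eqP; exact: (allP hpar t ht).
split.
- rewrite /Nmon.
  have -> : size (msupp G) = size [seq m <- map mk3 Linv | G@_m != 0].
    apply: perm_size; apply: uniq_perm.
    + exact: msupp_uniq.
    + by apply: filter_uniq; rewrite map_inj_uniq ?uniq_Linv //; exact: mk3_inj.
    + move=> m; rewrite mem_filter -mcoeff_msupp.
      by case: (boolP (m \in msupp G)) => // hm; rewrite (hsub _ hm).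
  rewrite size_filter count_map; apply: eq_in_count => t ht /=.
  by rewrite -hv.
- by move=> t ht; rewrite -hv //; exact: Hpos.
- move=> t ht hd; rewrite -hv //; apply: memN_msupp_eq0; apply: msize_mdeg_ge.
  by rewrite mdeg_mk3.
- move=> G0; apply/hasP.
  have hm := mlead_supp G0.
  have /mapP [t ht et] := hsub _ hm.
  exists t => //; apply/andP; split.
  + by rewrite -(mlead_deg G0) et mdeg_mk3.
  + by rewrite -hv // /c -et -mcoeff_msupp.
Qed.

Unset Implicit Arguments.

Theorem proposition5p1 (R : rcfType) (eta : complex R)
    (Heta : 7.-primitive_root eta) (G : {mpoly R[3]}) :
  special eta G ->
  [/\ tdeg G = 7%N -> Nmon G = 17%N,
      tdeg G <> 8%N,
      tdeg G <> 9%N,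
      tdeg G = 10%N -> Nmon G = 29%N \/ Nmon G = 30%N &
      tdeg G = 11%N -> (31 <= Nmon G)%N].
Proof.
move=> hsp.
have msz : forall D, tdeg G = D.+1 -> msize G = D.+2.
  by rewrite /tdeg => D; case: (msize G) => [|n] //= ->.
have nz : forall D, msize G = D.+1 -> G != 0.
  by move=> D hD; apply/eqP => G0; rewrite G0 msize0 in hD.
split => hD.
- have hs := msz _ hD.
  have hs12 : (msize G <= 12)%N by rewrite hs.
  have [hN hp hz _] := setup Heta hsp hs12.
  rewrite hN; apply: case7 => t ht hd; apply: hz => //; by rewrite hs.
- have hs := msz _ hD.
  have hs12 : (msize G <= 12)%N by rewrite hs.
  have [hN hp hz hl] := setup Heta hsp hs12.
  apply: (case8 (a := G@_(mk3 (8,1,1)%N))).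
  + by move=> t ht hd; apply: hz => //; rewrite hs.
  + by have := hl (nz _ hs); rewrite hs.
- have hs := msz _ hD.
  have hs12 : (msize G <= 12)%N by rewrite hs.
  have [hN hp hz hl] := setup Heta hsp hs12.
  apply: (case9 (a := G@_(mk3 (8,1,1)%N))).
  + by move=> t ht hd; apply: hz => //; rewrite hs.
  + by have := hl (nz _ hs); rewrite hs.
- have hs := msz _ hD.
  have hs12 : (msize G <= 12)%N by rewrite hs.
  have [hN hp hz hl] := setup Heta hsp hs12.
  rewrite hN; apply: case10 => //.
  + by move=> t ht hd; apply: hz => //; rewrite hs.
  + by have := hl (nz _ hs); rewrite hs.
- have hs := msz _ hD.
  have hs12 : (msize G <= 12)%N by rewrite hs.
  have [hN hp hz hl] := setup Heta hsp hs12.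
  rewrite hN; apply: case11 => //.
  by have := hl (nz _ hs); rewrite hs.
Qed.
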